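(* Let $f$ be the density on $\mathbb{R}$ given, for some $k_1,k_2>0$, by $$\log f(x)=\begin{cases}-\frac{x^2}{2}-c, & -k_1\le x\le k_2,\\ k_1x+\frac{k_1^2}{2}-c, & x<-k_1,\\ -k_2x+\frac{k_2^2}{2}-c,& x>k_2,\end{cases}$$ with $c=c(k_1,k_2)$ chosen so that $\int f=1$, and let $F$ be its distribution function. For $\alpha,\beta\in(0,1)$ with $\alpha+\beta<1$ define $$\sigma^2(\alpha,\beta)=\frac{1}{(1-\alpha-\beta)^2}\int_\alpha^{1-\beta}\!\int_\alpha^{1-\beta}\frac{\min(s,t)-st}{f(F^{-1}(s))f(F^{-1}(t))}\,ds\,dt.$$ Then $\sigma^2(\alpha,\beta)$ is strictly convex in a neighborhood of $(\alpha,\beta)=(F(-k_1),\,1-F(k_2))$. *)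

(* Defs.v *)
From Stdlib Require Import Reals Lra ClassicalEpsilon.
From Coquelicot Require Import Coquelicot.
Open Scope R_scope.

(* Unnormalized log-density (log f + c) of the Huber least-favourable density. *)
Definition hlog (k1 k2 x : R) : R :=
  if Rle_dec (- k1) x then
    (if Rle_dec x k2 then - x ^ 2 / 2 else - k2 * x + k2 ^ 2 / 2)
  else k1 * x + k1 ^ 2 / 2.

Definition hconst (k1 k2 : R) : R :=
  ln (RInt_gen (fun x => exp (hlog k1 k2 x))
        (Rbar_locally m_infty) (Rbar_locally p_infty)).

Definition hdens (k1 k2 x : R) : R := exp (hlog k1 k2 x - hconst k1 k2).

Definition hcdf (k1 k2 x : R) : R :=
  RInt_gen (hdens k1 k2) (Rbar_locally m_infty) (at_point x).

(* Inverse F^{-1}(s): a (the, since F is strictly increasing) x with F x = s. *)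
Definition hquant (k1 k2 s : R) : R :=
  epsilon (inhabits 0) (fun x => hcdf k1 k2 x = s).

Definition sigma2 (k1 k2 a b : R) : R :=
  / (1 - a - b) ^ 2 *
  RInt (fun s => RInt (fun t =>
          (Rmin s t - s * t) /
          (hdens k1 k2 (hquant k1 k2 s) * hdens k1 k2 (hquant k1 k2 t)))
        a (1 - b)) a (1 - b).

(* Main.v *)
Require Import Defs.
From Stdlib Require Import Reals Lra ClassicalEpsilon.
From Coquelicot Require Import Coquelicot.
Open Scope R_scope.

Definition clampm (k1 k2 x : R) : R := Rmax (- k1) (Rmin x k2).
Definition dh (k1 k2 x : R) : R := - clampm k1 k2 x.

Lemma hlog_clamp k1 k2 x : 0 < k1 -> 0 < k2 ->
  hlog k1 k2 x = (clampm k1 k2 x)^2/2 - clampm k1 k2 x * x.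
Proof.
  intros h1 h2. unfold hlog, clampm.
  destruct (Rle_dec (-k1) x); destruct (Rle_dec x k2);
  repeat (first [rewrite Rmin_left by lra | rewrite Rmin_right by lra]);
  repeat (first [rewrite Rmax_left by lra | rewrite Rmax_right by lra]); try field; lra.
Qed.

Lemma clampm_lip k1 k2 x y : 0 < k1 -> 0 < k2 ->
  Rabs (clampm k1 k2 y - clampm k1 k2 x) <= Rabs (y - x).
Proof.
  intros h1 h2. unfold clampm.
  destruct (Rle_dec x k2); destruct (Rle_dec y k2);
  repeat (first [rewrite (Rmin_left x) by lra | rewrite (Rmin_right x) by lra
          | rewrite (Rmin_left y) by lra | rewrite (Rmin_right y) by lra]);
  destruct (Rle_dec (-k1) x); destruct (Rle_dec (-k1) y);
  repeat (first [rewrite (Rmax_left (-k1) x) by lra | rewrite (Rmax_right (-k1) x) by lra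
          | rewrite (Rmax_left (-k1) y) by lra | rewrite (Rmax_right (-k1) y) by lra
          | rewrite (Rmax_left (-k1) k2) by lra | rewrite (Rmax_right (-k1) k2) by lra]);
  unfold Rabs; repeat destruct Rcase_abs; lra.
Qed.

Lemma hlog_err k1 k2 x y : 0 < k1 -> 0 < k2 ->
  Rabs (hlog k1 k2 y - hlog k1 k2 x - dh k1 k2 x * (y - x)) <= (y - x)^2.
Proof.
  intros h1 h2. rewrite !hlog_clamp by lra. unfold dh.
  assert (E : (clampm k1 k2 y)^2/2 - clampm k1 k2 y * y - ((clampm k1 k2 x)^2/2 - clampm k1 k2 x * x)
     - - clampm k1 k2 x * (y - x) = (clampm k1 k2 y - clampm k1 k2 x) * ((clampm k1 k2 y + clampm k1 k2 x)/2 - y)) by field.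
  rewrite E. clear E.
  unfold clampm.
  destruct (Rle_dec x k2); destruct (Rle_dec y k2);
  repeat (first [rewrite (Rmin_left x) by lra | rewrite (Rmin_right x) by lra
          | rewrite (Rmin_left y) by lra | rewrite (Rmin_right y) by lra]);
  destruct (Rle_dec (-k1) x); destruct (Rle_dec (-k1) y);
  repeat (first [rewrite (Rmax_left (-k1) x) by lra | rewrite (Rmax_right (-k1) x) by lra
          | rewrite (Rmax_left (-k1) y) by lra | rewrite (Rmax_right (-k1) y) by lra
          | rewrite (Rmax_left (-k1) k2) by lra | rewrite (Rmax_right (-k1) k2) by lra]);
  rewrite Rabs_mult; unfold Rabs; repeat destruct Rcase_abs; try nra.
  all: match goal with |- ?a * _ <= _ => replace a with 0 by ring end; rewrite Rmult_0_l; apply pow2_ge_0.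
Qed.

Ltac drw H := let T := type of H in
  match T with is_derive ?f ?x ?l =>
    let e := fresh in assert (e : Derive (fun t : R => f t) x = l) by (apply is_derive_unique; exact H);
    rewrite e; clear e end.

Lemma quad_deriv (phi : R -> R) x l K : 0 <= K ->
  (forall y, Rabs (phi y - phi x - l * (y - x)) <= K * (y - x)^2) -> is_derive phi x l.
Proof.
  intros HK H. apply is_derive_Reals. intros eps He.
  assert (Hd : 0 < eps / (K + 1)) by (apply Rdiv_lt_0_compat; lra).
  exists (mkposreal _ Hd). intros h hn hlt. simpl in hlt.
  specialize (H (x + h)). replace (x + h - x) with h in H by ring.
  replace ((phi (x + h) - phi x) / h - l) with ((phi (x + h) - phi x - l * h) / h) by (field; auto).
  unfold Rdiv. rewrite Rabs_mult, Rabs_Rinv by auto.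
  assert (Hh : 0 < Rabs h) by (apply Rabs_pos_lt; auto).
  apply Rle_lt_trans with (K * h^2 * / Rabs h).
  { apply Rmult_le_compat_r. left; apply Rinv_0_lt_compat; auto. auto. }
  replace (K * h^2 * / Rabs h) with (K * Rabs h).
  2:{ rewrite <- (pow2_abs h). field. lra. }
  apply Rle_lt_trans with ((K+1) * Rabs h). nra.
  replace eps with ((K+1) * (eps / (K+1))) by (field; lra).
  apply Rmult_lt_compat_l; lra.
Qed.

Lemma hlog_deriv k1 k2 x : 0 < k1 -> 0 < k2 -> is_derive (hlog k1 k2) x (dh k1 k2 x).
Proof.
  intros h1 h2. apply quad_deriv with 1. lra. intros y. rewrite Rmult_1_l. now apply hlog_err.
Qed.

Lemma dh_cont k1 k2 x : 0 < k1 -> 0 < k2 -> continuous (dh k1 k2) x.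
Proof.
  intros h1 h2. apply continuity_pt_filterlim. intros eps He. exists eps; split; auto.
  intros y [_ Hy]. unfold dh, R_dist in *. simpl in *. unfold R_dist in *. rewrite Rabs_minus_sym. replace (- clampm k1 k2 x - - clampm k1 k2 y) with
    (clampm k1 k2 y - clampm k1 k2 x) by ring.
  eapply Rle_lt_trans. apply clampm_lip; auto. exact Hy.
Qed.

Definition g0 k1 k2 x := exp (hlog k1 k2 x).

Lemma g0_pos k1 k2 x : 0 < g0 k1 k2 x.
Proof. apply exp_pos. Qed.

Lemma g0_deriv k1 k2 x : 0 < k1 -> 0 < k2 -> is_derive (g0 k1 k2) x (g0 k1 k2 x * dh k1 k2 x).
Proof.
  intros h1 h2. unfold g0.
  eapply is_derive_ext. intros t; reflexivity.
  replace (exp (hlog k1 k2 x) * dh k1 k2 x) with (scal (dh k1 k2 x) (exp (hlog k1 k2 x))).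
  2:{ unfold scal; simpl; unfold mult; simpl; ring. }
  apply (is_derive_comp exp (hlog k1 k2)). apply is_derive_exp. now apply hlog_deriv.
Qed.

Lemma g0_cont k1 k2 x : 0 < k1 -> 0 < k2 -> continuous (g0 k1 k2) x.
Proof. intros. apply (ex_derive_continuous (g0 k1 k2)). eexists. now apply g0_deriv. Qed.

Lemma ex_RInt_g0 k1 k2 a b : 0 < k1 -> 0 < k2 -> ex_RInt (g0 k1 k2) a b.
Proof. intros. apply (@ex_RInt_continuous R_CompleteNormedModule). intros; now apply g0_cont. Qed.

Lemma RInt_FTC (Phi phi : R -> R) a b :
  (forall x, Rmin a b <= x <= Rmax a b -> is_derive Phi x (phi x)) ->
  (forall x, Rmin a b <= x <= Rmax a b -> continuous phi x) ->
  RInt phi a b = Phi b - Phi a.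
Proof.
  intros H1 H2. apply is_RInt_unique. apply (is_RInt_derive Phi phi); auto.
Qed.

Definition Jx k1 k2 x := RInt (g0 k1 k2) (- k1) x.

Lemma Jx_deriv k1 k2 x : 0 < k1 -> 0 < k2 -> is_derive (Jx k1 k2) x (g0 k1 k2 x).
Proof.
  intros. apply (is_derive_RInt (g0 k1 k2) (Jx k1 k2) (-k1)).
  - apply filter_forall. intros y. unfold Jx. apply (@RInt_correct R_CompleteNormedModule). now apply ex_RInt_g0.
  - now apply g0_cont.
Qed.

Lemma dh_left k1 k2 x : 0 < k1 -> 0 < k2 -> x <= - k1 -> dh k1 k2 x = k1.
Proof. intros. unfold dh, clampm. rewrite Rmin_left by lra. rewrite Rmax_left by lra. ring. Qed.
Lemma dh_right k1 k2 x : 0 < k1 -> 0 < k2 -> k2 <= x -> dh k1 k2 x = - k2.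
Proof. intros. unfold dh, clampm. rewrite Rmin_right by lra. rewrite Rmax_right by lra. ring. Qed.
Lemma dh_mid k1 k2 x : 0 < k1 -> 0 < k2 -> - k1 <= x <= k2 -> dh k1 k2 x = - x.
Proof. intros. unfold dh, clampm. rewrite Rmin_left by lra. rewrite Rmax_right by lra. ring. Qed.

Definition Ef k1 k2 x := g0 k1 k2 (- k1) / k1 + Jx k1 k2 x.
Definition Zc k1 k2 := Ef k1 k2 k2 + g0 k1 k2 k2 / k2.

Lemma Ef_deriv k1 k2 x : 0 < k1 -> 0 < k2 -> is_derive (Ef k1 k2) x (g0 k1 k2 x).
Proof.
  intros. unfold Ef. auto_derive. eexists; now apply Jx_deriv.
  drw (Jx_deriv k1 k2 x H H0). ring.
Qed.

Lemma Jx_left k1 k2 x : 0 < k1 -> 0 < k2 -> x <= - k1 ->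
  Jx k1 k2 x = g0 k1 k2 x / k1 - g0 k1 k2 (-k1) / k1.
Proof.
  intros. unfold Jx. apply (RInt_FTC (fun y => g0 k1 k2 y / k1)).
  - intros y Hy. rewrite Rmin_right, Rmax_left in Hy by lra.
    auto_derive. eexists; now apply g0_deriv.
    drw (g0_deriv k1 k2 y H H0). rewrite dh_left by lra. field. lra.
  - intros; now apply g0_cont.
Qed.

Lemma Ef_left k1 k2 x : 0 < k1 -> 0 < k2 -> x <= - k1 -> Ef k1 k2 x = g0 k1 k2 x / k1.
Proof. intros. unfold Ef. rewrite Jx_left by auto. ring. Qed.

Lemma Jx_right k1 k2 x : 0 < k1 -> 0 < k2 -> k2 <= x ->
  Jx k1 k2 x = Jx k1 k2 k2 + g0 k1 k2 k2 / k2 - g0 k1 k2 x / k2.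
Proof.
  intros. unfold Jx.
  rewrite <- (RInt_Chasles (g0 k1 k2) (-k1) k2 x) by (apply ex_RInt_g0; auto).
  rewrite (RInt_FTC (fun y => - g0 k1 k2 y / k2) (g0 k1 k2) k2 x).
  - unfold plus; simpl. field. lra.
  - intros y Hy. rewrite Rmin_left, Rmax_right in Hy by lra.
    auto_derive. eexists; now apply g0_deriv.
    drw (g0_deriv k1 k2 y H H0). rewrite dh_right by lra. field. lra.
  - intros; now apply g0_cont.
Qed.

Lemma Ef_right k1 k2 x : 0 < k1 -> 0 < k2 -> k2 <= x -> Ef k1 k2 x = Zc k1 k2 - g0 k1 k2 x / k2.
Proof. intros. unfold Zc, Ef. rewrite Jx_right by auto. ring. Qed.

Lemma hlog_left k1 k2 x : 0 < k1 -> 0 < k2 -> x <= - k1 -> hlog k1 k2 x = k1 * x + k1^2/2.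
Proof. intros. rewrite hlog_clamp by auto. unfold clampm. rewrite Rmin_left by lra.
  rewrite Rmax_left by lra. field. Qed.
Lemma hlog_right k1 k2 x : 0 < k1 -> 0 < k2 -> k2 <= x -> hlog k1 k2 x = - k2 * x + k2^2/2.
Proof. intros. rewrite hlog_clamp by auto. unfold clampm. rewrite Rmin_right by lra.
  rewrite Rmax_right by lra. field. Qed.
Lemma hlog_mid k1 k2 x : 0 < k1 -> 0 < k2 -> - k1 <= x <= k2 -> hlog k1 k2 x = - x^2/2.
Proof. intros. rewrite hlog_clamp by auto. unfold clampm. rewrite Rmin_left by lra.
  rewrite Rmax_right by lra. field. Qed.

Lemma g0_small_left k1 k2 eps : 0 < k1 -> 0 < k2 -> 0 < eps ->
  exists M, forall x, x < M -> g0 k1 k2 x < eps.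
Proof.
  intros. exists (Rmin (- k1) ((ln eps - k1^2/2)/k1)). intros x Hx.
  assert (x <= -k1) by (eapply Rlt_le, Rlt_le_trans; [exact Hx| apply Rmin_l]).
  assert (x < (ln eps - k1^2/2)/k1) by (eapply Rlt_le_trans; [exact Hx| apply Rmin_r]).
  unfold g0. rewrite hlog_left by auto. rewrite <- (exp_ln eps) by auto.
  apply exp_increasing. apply Rmult_lt_compat_l with (r := k1) in H3; auto.
  replace (k1 * ((ln eps - k1 ^ 2 / 2) / k1)) with (ln eps - k1^2/2) in H3 by (field; lra). lra.
Qed.

Lemma g0_small_right k1 k2 eps : 0 < k1 -> 0 < k2 -> 0 < eps ->
  exists M, forall x, M < x -> g0 k1 k2 x < eps.
Proof.
  intros. exists (Rmax k2 ((k2^2/2 - ln eps)/k2)). intros x Hx.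
  assert (k2 <= x) by (eapply Rlt_le, Rle_lt_trans; [apply Rmax_l| exact Hx]).
  assert ((k2^2/2 - ln eps)/k2 < x) by (eapply Rle_lt_trans; [apply Rmax_r| exact Hx]).
  unfold g0. rewrite hlog_right by auto. rewrite <- (exp_ln eps) by auto.
  apply exp_increasing. apply Rmult_lt_compat_l with (r := k2) in H3; auto.
  replace (k2 * ((k2 ^ 2 / 2 - ln eps) / k2)) with (k2^2/2 - ln eps) in H3 by (field; lra). lra.
Qed.

Lemma Jx_nonneg k1 k2 x : 0 < k1 -> 0 < k2 -> - k1 <= x -> 0 <= Jx k1 k2 x.
Proof.
  intros. unfold Jx. apply RInt_ge_0; auto. apply ex_RInt_g0; auto.
  intros; left; apply g0_pos.
Qed.

Lemma Zc_pos k1 k2 : 0 < k1 -> 0 < k2 -> 0 < Zc k1 k2.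
Proof.
  intros. unfold Zc, Ef. assert (0 <= Jx k1 k2 k2) by (apply Jx_nonneg; lra).
  assert (0 < g0 k1 k2 (-k1) / k1) by (apply Rdiv_lt_0_compat; auto; apply g0_pos).
  assert (0 < g0 k1 k2 k2 / k2) by (apply Rdiv_lt_0_compat; auto; apply g0_pos). lra.
Qed.

Definition Fc k1 k2 x := Ef k1 k2 x / Zc k1 k2.
Definition fd k1 k2 x := g0 k1 k2 x / Zc k1 k2.

Lemma Fc_deriv k1 k2 x : 0 < k1 -> 0 < k2 -> is_derive (Fc k1 k2) x (fd k1 k2 x).
Proof.
  intros. unfold Fc, fd. auto_derive. eexists; now apply Ef_deriv.
  drw (Ef_deriv k1 k2 x H H0). field. apply Rgt_not_eq, Zc_pos; auto.
Qed.

Lemma Fc_cont k1 k2 x : 0 < k1 -> 0 < k2 -> continuous (Fc k1 k2) x.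
Proof. intros. apply (ex_derive_continuous (Fc k1 k2)). eexists. now apply Fc_deriv. Qed.

Lemma fd_pos k1 k2 x : 0 < k1 -> 0 < k2 -> 0 < fd k1 k2 x.
Proof. intros. unfold fd. apply Rdiv_lt_0_compat. apply g0_pos. now apply Zc_pos. Qed.

Lemma fd_deriv k1 k2 x : 0 < k1 -> 0 < k2 -> is_derive (fd k1 k2) x (fd k1 k2 x * dh k1 k2 x).
Proof.
  intros. unfold fd. auto_derive. eexists; now apply g0_deriv.
  drw (g0_deriv k1 k2 x H H0). field. apply Rgt_not_eq, Zc_pos; auto.
Qed.

Lemma fd_cont k1 k2 x : 0 < k1 -> 0 < k2 -> continuous (fd k1 k2) x.
Proof. intros. apply (ex_derive_continuous (fd k1 k2)). eexists. now apply fd_deriv. Qed.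

Lemma lim_left_gen (phi : R -> R) k1 k2 c : 0 < k1 -> 0 < k2 -> 0 < c ->
  (forall x, x <= - k1 -> phi x = g0 k1 k2 x / c) ->
  filterlim phi (Rbar_locally m_infty) (locally 0).
Proof.
  intros. apply filterlim_locally. intros eps.
  destruct (g0_small_left k1 k2 (eps * c)) as [M HM]; auto.
  apply Rmult_lt_0_compat; auto. apply cond_pos.
  exists (Rmin M (-k1)). intros x Hx.
  assert (x < M) by (eapply Rlt_le_trans; [exact Hx | apply Rmin_l]).
  assert (x <= -k1) by (eapply Rlt_le, Rlt_le_trans; [exact Hx | apply Rmin_r]).
  unfold ball; simpl; unfold AbsRing_ball; simpl. unfold abs, minus, plus, opp; simpl.
  rewrite H2 by auto. specialize (HM x H3). pose proof (g0_pos k1 k2 x).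
  rewrite Rabs_right. 2:{ apply Rle_ge. replace (g0 k1 k2 x / c + - 0) with (g0 k1 k2 x / c) by ring.
    left; apply Rdiv_lt_0_compat; auto. }
  replace (g0 k1 k2 x / c + - 0) with (g0 k1 k2 x / c) by ring.
  apply Rmult_lt_reg_r with c; auto. field_simplify; lra.
Qed.

Lemma lim_right_gen (phi : R -> R) k1 k2 c L : 0 < k1 -> 0 < k2 -> 0 < c ->
  (forall x, k2 <= x -> phi x = L - g0 k1 k2 x / c) ->
  filterlim phi (Rbar_locally p_infty) (locally L).
Proof.
  intros. apply filterlim_locally. intros eps.
  destruct (g0_small_right k1 k2 (eps * c)) as [M HM]; auto.
  apply Rmult_lt_0_compat; auto. apply cond_pos.
  exists (Rmax M k2). intros x Hx.
  assert (M < x) by (eapply Rle_lt_trans; [apply Rmax_l | exact Hx]).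
  assert (k2 <= x) by (eapply Rlt_le, Rle_lt_trans; [apply Rmax_r | exact Hx]).
  unfold ball; simpl; unfold AbsRing_ball; simpl. unfold abs, minus, plus, opp; simpl.
  rewrite H2 by auto. specialize (HM x H3). pose proof (g0_pos k1 k2 x).
  replace (L - g0 k1 k2 x / c + - L) with (- (g0 k1 k2 x / c)) by ring.
  rewrite Rabs_Ropp, Rabs_right. 2:{ apply Rle_ge. left; apply Rdiv_lt_0_compat; auto. }
  apply Rmult_lt_reg_r with c; auto. field_simplify; lra.
Qed.

Lemma hconst_eq k1 k2 : 0 < k1 -> 0 < k2 -> hconst k1 k2 = ln (Zc k1 k2).
Proof.
  intros. unfold hconst. f_equal.
  apply is_RInt_gen_unique.
  replace (Zc k1 k2) with (Zc k1 k2 - 0) by ring.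
  apply is_RInt_gen_ext with (Derive (Ef k1 k2)).
  { apply filter_forall. intros ab y _. apply is_derive_unique. now apply Ef_deriv. }
  apply is_RInt_gen_Derive.
  - apply filter_forall. intros ab y _. eexists; now apply Ef_deriv.
  - apply filter_forall. intros ab y _.
    apply continuous_ext with (g0 k1 k2).
    { intros t. symmetry. apply is_derive_unique. now apply Ef_deriv. }
    now apply g0_cont.
  - apply (lim_left_gen _ k1 k2 k1); auto. intros; now apply Ef_left.
  - apply (lim_right_gen _ k1 k2 k2); auto. intros; now apply Ef_right.
Qed.

Lemma hdens_eq k1 k2 x : 0 < k1 -> 0 < k2 -> hdens k1 k2 x = fd k1 k2 x.
Proof.
  intros. unfold hdens, fd, g0. rewrite hconst_eq by auto.
  unfold Rminus. rewrite exp_plus, exp_Ropp, exp_ln by (apply Zc_pos; auto). reflexivity.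
Qed.

Lemma hcdf_eq k1 k2 x : 0 < k1 -> 0 < k2 -> hcdf k1 k2 x = Fc k1 k2 x.
Proof.
  intros. unfold hcdf.
  apply is_RInt_gen_unique.
  replace (Fc k1 k2 x) with (Fc k1 k2 x - 0) by ring.
  apply is_RInt_gen_ext with (Derive (Fc k1 k2)).
  { apply filter_forall. intros ab y _. rewrite hdens_eq by auto. apply is_derive_unique. now apply Fc_deriv. }
  apply is_RInt_gen_Derive.
  - apply filter_forall. intros ab y _. eexists; now apply Fc_deriv.
  - apply filter_forall. intros ab y _.
    apply continuous_ext with (fd k1 k2).
    { intros t. symmetry. apply is_derive_unique. now apply Fc_deriv. }
    now apply fd_cont.
  - apply (lim_left_gen _ k1 k2 (k1 * Zc k1 k2)); auto.
    apply Rmult_lt_0_compat; auto; now apply Zc_pos.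
    intros; unfold Fc; rewrite Ef_left by auto. field. split; try lra. apply Rgt_not_eq, Zc_pos; auto.
  - intros P HP. apply locally_singleton in HP. exact HP.
Qed.

Lemma inv_deriv (F Q : R -> R) s d r : 0 < r ->
  (forall s', Rabs (s' - s) < r -> F (Q s') = s') ->
  continuity_pt Q s -> derivable_pt_lim F (Q s) d -> d <> 0 ->
  derivable_pt_lim Q s (/ d).
Proof.
  intros Hr HFQ HQc HF Hd eps He.
  set (d' := Rabs d). assert (Hd' : 0 < d') by (apply Rabs_pos_lt; auto).
  set (e1 := Rmin (d'/2) (eps * d'^2 / 2)).
  assert (He1 : 0 < e1). { unfold e1. apply Rmin_glb_lt. lra. apply Rmult_lt_0_compat.
    apply Rmult_lt_0_compat; auto. apply pow_lt; auto. lra. }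
  destruct (HF e1 He1) as [d1 Hd1].
  destruct (HQc d1 (cond_pos d1)) as [d2 [Hd2 Hd2']].
  assert (Hdel : 0 < Rmin d2 r) by (apply Rmin_glb_lt; auto).
  exists (mkposreal _ Hdel). intros h hn hlt. simpl in hlt.
  assert (hd2 : Rabs h < d2) by (eapply Rlt_le_trans; [exact hlt | apply Rmin_l]).
  assert (hr : Rabs h < r) by (eapply Rlt_le_trans; [exact hlt | apply Rmin_r]).
  assert (E0 : F (Q s) = s) by (apply HFQ; rewrite Rminus_diag, Rabs_R0; auto).
  assert (E1 : F (Q (s + h)) = s + h) by (apply HFQ; replace (s + h - s) with h by ring; auto).
  set (k := Q (s + h) - Q s).
  assert (Hk : k <> 0). { intro Hk0. unfold k in Hk0. assert (Q (s+h) = Q s) by lra.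
    rewrite H in E1. lra. }
  assert (Hk1 : Rabs k < d1). { unfold k. specialize (Hd2' (s + h)). simpl in Hd2'. unfold R_dist in Hd2'.
    apply Hd2'. split. unfold D_x, no_cond. split; auto. intro; lra.
    replace (s + h - s) with h by ring. auto. }
  specialize (Hd1 k Hk Hk1). unfold k in Hd1 at 1.
  replace (Q s + (Q (s + h) - Q s)) with (Q (s + h)) in Hd1 by ring.
  rewrite E1, E0 in Hd1. replace (s + h - s) with h in Hd1 by ring.
  fold k. set (rho := h / k) in *.
  assert (Hrho1 : Rabs (rho - d) < d'/2) by (eapply Rlt_le_trans; [exact Hd1 | apply Rmin_l]).
  assert (Hrho2 : Rabs (rho - d) < eps * d'^2/2) by (eapply Rlt_le_trans; [exact Hd1 | apply Rmin_r]).
  assert (Hrho : d'/2 < Rabs rho).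
  { pose proof (Rabs_triang_inv d (d - rho)). replace (d - (d - rho)) with rho in H by ring.
    rewrite Rabs_minus_sym in Hrho1. unfold d' in *. lra. }
  assert (Hrn : rho <> 0). { intro Hz. rewrite Hz, Rabs_R0 in Hrho. lra. }
  replace (k / h - / d) with ((d - rho) / (rho * d)).
  2:{ unfold rho. clearbody k. replace (RinvImpl.Rinv d) with (/ d) by reflexivity. field. repeat split; auto. }
  unfold Rdiv. rewrite Rabs_mult, Rabs_Rinv by (apply Rmult_integral_contrapositive; auto).
  rewrite Rabs_mult. fold d'. rewrite Rabs_minus_sym.
  apply Rle_lt_trans with (Rabs (rho - d) * / (d'/2 * d')).
  { apply Rmult_le_compat_l. apply Rabs_pos. apply Rinv_le_contravar.
    apply Rmult_lt_0_compat; lra. apply Rmult_le_compat_r; lra. }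
  apply Rmult_lt_reg_r with (d'/2 * d'). apply Rmult_lt_0_compat; lra.
  rewrite Rmult_assoc, Rinv_l, Rmult_1_r by (apply Rgt_not_eq; apply Rmult_lt_0_compat; lra).
  replace (eps * (d' / 2 * d')) with (eps * d'^2/2) by field. auto.
Qed.

Lemma Fc_strict k1 k2 x y : 0 < k1 -> 0 < k2 -> x < y -> Fc k1 k2 x < Fc k1 k2 y.
Proof.
  intros. destruct (MVT_cor2 (Fc k1 k2) (fd k1 k2) x y H1) as [c [Hc _]].
  intros; apply is_derive_Reals; now apply Fc_deriv.
  pose proof (fd_pos k1 k2 c H H0). nra.
Qed.

Lemma Fc_le k1 k2 x y : 0 < k1 -> 0 < k2 -> x <= y -> Fc k1 k2 x <= Fc k1 k2 y.
Proof. intros. destruct H1. left; now apply Fc_strict. subst; lra. Qed.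

Lemma Fc_lt_inv k1 k2 x y : 0 < k1 -> 0 < k2 -> Fc k1 k2 x < Fc k1 k2 y -> x < y.
Proof. intros. destruct (Rlt_le_dec x y); auto. apply Fc_le with (k1 := k1) (k2 := k2) in r; auto. lra. Qed.

Lemma Fc_inj k1 k2 x y : 0 < k1 -> 0 < k2 -> Fc k1 k2 x = Fc k1 k2 y -> x = y.
Proof. intros. destruct (Rtotal_order x y) as [h|[h|h]]; auto;
  apply Fc_strict with (k1 := k1) (k2 := k2) in h; auto; lra. Qed.

Definition Qc k1 k2 s := hquant k1 k2 s.

Lemma Qc_spec k1 k2 s : 0 < k1 -> 0 < k2 -> (exists y, Fc k1 k2 y = s) -> Fc k1 k2 (Qc k1 k2 s) = s.
Proof.
  intros H1 H2 [y Hy]. unfold Qc, hquant.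
  rewrite <- hcdf_eq by auto. apply epsilon_spec. exists y. rewrite hcdf_eq; auto.
Qed.

Lemma Qc_Fc k1 k2 y : 0 < k1 -> 0 < k2 -> Qc k1 k2 (Fc k1 k2 y) = y.
Proof. intros. apply (Fc_inj k1 k2); auto. apply Qc_spec; eauto. Qed.

Lemma Fc_ivt k1 k2 u v s : 0 < k1 -> 0 < k2 -> u <= v -> Fc k1 k2 u <= s <= Fc k1 k2 v ->
  exists y, u <= y <= v /\ Fc k1 k2 y = s.
Proof.
  intros. destruct (IVT_gen_consistent (Fc k1 k2) u v s) as [y [Hy1 Hy2]].
  intros; now apply Fc_cont.
  rewrite Rmin_left, Rmax_right; auto. apply Fc_le; auto.
  apply Fc_le; auto.
  exists y. rewrite Rmin_left, Rmax_right in Hy1; auto.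
Qed.

Definition inR k1 k2 s := exists u v, Fc k1 k2 u < s < Fc k1 k2 v.

Lemma inR_spec k1 k2 s : 0 < k1 -> 0 < k2 -> inR k1 k2 s -> Fc k1 k2 (Qc k1 k2 s) = s.
Proof.
  intros H1 H2 [u [v Huv]]. apply Qc_spec; auto.
  destruct (Fc_ivt k1 k2 u v s) as [y [_ Hy]]; eauto; try lra.
  left. apply (Fc_lt_inv k1 k2); auto; lra.
Qed.

Lemma Qc_cont k1 k2 s : 0 < k1 -> 0 < k2 -> inR k1 k2 s -> continuity_pt (Qc k1 k2) s.
Proof.
  intros H1 H2 Hs. pose proof (inR_spec k1 k2 s H1 H2 Hs) as E0.
  intros eps He. set (y0 := Qc k1 k2 s).
  set (del := Rmin (Fc k1 k2 (y0 + eps) - s) (s - Fc k1 k2 (y0 - eps))).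
  assert (Hp : Fc k1 k2 y0 < Fc k1 k2 (y0 + eps)) by (apply Fc_strict; auto; lra).
  assert (Hm : Fc k1 k2 (y0 - eps) < Fc k1 k2 y0) by (apply Fc_strict; auto; lra).
  fold y0 in E0.
  exists del. split. unfold del; apply Rmin_glb_lt; lra.
  intros s' [_ Hs']. simpl in Hs'. unfold R_dist in Hs'. simpl. unfold R_dist.
  assert (Hd1 : del <= Fc k1 k2 (y0 + eps) - s) by apply Rmin_l.
  assert (Hd2 : del <= s - Fc k1 k2 (y0 - eps)) by apply Rmin_r.
  assert (Hs1 : Fc k1 k2 (y0 - eps) < s' < Fc k1 k2 (y0 + eps)).
  { unfold Rabs in Hs'; destruct Rcase_abs in Hs'; lra. }
  assert (E1 : Fc k1 k2 (Qc k1 k2 s') = s') by (apply inR_spec; auto; do 2 eexists; exact Hs1).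
  rewrite <- E1 in Hs1. destruct Hs1 as [Ha Hb].
  apply Fc_lt_inv in Ha; auto. apply Fc_lt_inv in Hb; auto.
  unfold Rabs; destruct Rcase_abs; lra.
Qed.

Lemma inR_open k1 k2 s : inR k1 k2 s -> exists r, 0 < r /\ forall s', Rabs (s' - s) < r -> inR k1 k2 s'.
Proof.
  intros [u [v Huv]]. exists (Rmin (s - Fc k1 k2 u) (Fc k1 k2 v - s)). split.
  apply Rmin_glb_lt; lra. intros s' Hs'. exists u, v.
  assert (Rabs (s' - s) < s - Fc k1 k2 u) by (eapply Rlt_le_trans; [exact Hs' | apply Rmin_l]).
  assert (Rabs (s' - s) < Fc k1 k2 v - s) by (eapply Rlt_le_trans; [exact Hs' | apply Rmin_r]).
  unfold Rabs in *; destruct Rcase_abs; lra.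
Qed.

Lemma Qc_deriv k1 k2 s : 0 < k1 -> 0 < k2 -> inR k1 k2 s ->
  is_derive (Qc k1 k2) s (/ fd k1 k2 (Qc k1 k2 s)).
Proof.
  intros H1 H2 Hs. apply is_derive_Reals.
  destruct (inR_open k1 k2 s Hs) as [r [Hr Hr']].
  apply (inv_deriv (Fc k1 k2) (Qc k1 k2) s _ r); auto.
  intros; apply inR_spec; auto.
  now apply Qc_cont.
  apply is_derive_Reals. now apply Fc_deriv.
  apply Rgt_not_eq, fd_pos; auto.
Qed.

Lemma c_plus {U : UniformSpace} (f g : U -> R) x : continuous f x -> continuous g x ->
  continuous (fun y => f y + g y) x.
Proof. intros. exact (continuous_plus f g x H H0). Qed.
Lemma c_opp {U : UniformSpace} (f : U -> R) x : continuous f x -> continuous (fun y => - f y) x.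
Proof. intros. exact (continuous_opp f x H). Qed.
Lemma c_minus {U : UniformSpace} (f g : U -> R) x : continuous f x -> continuous g x ->
  continuous (fun y => f y - g y) x.
Proof. intros. apply c_plus; auto. apply c_opp; auto. Qed.
Lemma c_mult {U : UniformSpace} (f g : U -> R) x : continuous f x -> continuous g x ->
  continuous (fun y => f y * g y) x.
Proof. intros. exact (continuous_mult f g x H H0). Qed.
Lemma c_const {U : UniformSpace} (c : R) (x : U) : continuous (fun _ => c) x.
Proof. apply continuous_const. Qed.
Lemma c_inv {U : UniformSpace} (f : U -> R) x : continuous f x -> f x <> 0 ->
  continuous (fun y => / f y) x.
Proof. intros. apply (continuous_comp f (fun t : R => / t)); auto. now apply continuous_Rinv. Qed.
Lemma c_div {U : UniformSpace} (f g : U -> R) x : continuous f x -> continuous g x -> g x <> 0 ->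
  continuous (fun y => f y / g y) x.
Proof. intros. apply c_mult; auto. apply c_inv; auto. Qed.
Lemma c_pow {U : UniformSpace} (f : U -> R) x n : continuous f x -> continuous (fun y => f y ^ n) x.
Proof. intros. induction n. simpl. apply c_const. simpl. apply c_mult; auto. Qed.
Lemma c_id (x : R) : continuous (fun y : R => y) x.
Proof. apply continuous_id. Qed.
Lemma c_comp {U : UniformSpace} (f : U -> R) (g : R -> R) x : continuous f x -> continuous g (f x) ->
  continuous (fun y => g (f y)) x.
Proof. intros. apply (continuous_comp f g); auto. Qed.

Lemma lip_cont (phi : R -> R) x K : 0 <= K -> (forall y, Rabs (phi y - phi x) <= K * Rabs (y - x)) ->
  continuous phi x.
Proof.
  intros HK H. apply continuity_pt_filterlim. intros eps He.
  exists (eps / (K + 1)). split. apply Rdiv_lt_0_compat; lra.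
  intros y [_ Hy]. simpl in *. unfold R_dist in *.
  eapply Rle_lt_trans. apply H.
  apply Rle_lt_trans with ((K + 1) * Rabs (y - x)). pose proof (Rabs_pos (y - x)). nra.
  apply Rmult_lt_reg_l with (/ (K+1)). apply Rinv_0_lt_compat; lra.
  rewrite <- Rmult_assoc, Rinv_l, Rmult_1_l by lra. lra.
Qed.

Lemma Rmin_lip c y x : Rabs (Rmin c y - Rmin c x) <= Rabs (y - x).
Proof. unfold Rmin. destruct (Rle_dec c y); destruct (Rle_dec c x); unfold Rabs;
  repeat destruct Rcase_abs; lra. Qed.

Lemma c_Rmin (c x : R) : continuous (fun y => Rmin c y) x.
Proof. apply lip_cont with 1. lra. intros; rewrite Rmult_1_l; apply Rmin_lip. Qed.

Lemma cpt (f : R -> R) x : continuity_pt f x -> continuous f x.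
Proof. apply continuity_pt_filterlim. Qed.

Definition A1 k1 k2 x := RInt (Fc k1 k2) 0 x.
Definition A2 k1 k2 x := RInt (fun y => y * Fc k1 k2 y) 0 x.
Definition Gf k1 k2 l u := 2 * u * (A1 k1 k2 u - A1 k1 k2 l) - 2 * (A2 k1 k2 u - A2 k1 k2 l)
   - (A1 k1 k2 u - A1 k1 k2 l)^2.

Lemma A1_deriv k1 k2 x : 0 < k1 -> 0 < k2 -> is_derive (A1 k1 k2) x (Fc k1 k2 x).
Proof.
  intros. apply (is_derive_RInt (Fc k1 k2) (A1 k1 k2) 0).
  - apply filter_forall. intros y. unfold A1. apply (@RInt_correct R_CompleteNormedModule).
    apply (@ex_RInt_continuous R_CompleteNormedModule). intros; now apply Fc_cont.
  - now apply Fc_cont.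
Qed.

Lemma c_xFc k1 k2 x : 0 < k1 -> 0 < k2 -> continuous (fun y => y * Fc k1 k2 y) x.
Proof. intros. apply c_mult. apply c_id. now apply Fc_cont. Qed.

Lemma A2_deriv k1 k2 x : 0 < k1 -> 0 < k2 -> is_derive (A2 k1 k2) x (x * Fc k1 k2 x).
Proof.
  intros. apply (is_derive_RInt (fun y => y * Fc k1 k2 y) (A2 k1 k2) 0).
  - apply filter_forall. intros y. unfold A2. apply (@RInt_correct R_CompleteNormedModule).
    apply (@ex_RInt_continuous R_CompleteNormedModule). intros; now apply c_xFc.
  - now apply c_xFc.
Qed.

Lemma A1_cont k1 k2 x : 0 < k1 -> 0 < k2 -> continuous (A1 k1 k2) x.
Proof. intros. apply (ex_derive_continuous (A1 k1 k2)). eexists. now apply A1_deriv. Qed.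
Lemma A2_cont k1 k2 x : 0 < k1 -> 0 < k2 -> continuous (A2 k1 k2) x.
Proof. intros. apply (ex_derive_continuous (A2 k1 k2)). eexists. now apply A2_deriv. Qed.

Ltac cont1 :=
  match goal with
  | |- continuous (fun _ => _ + _) _ => apply c_plus
  | |- continuous (fun _ => _ - _) _ => apply c_minus
  | |- continuous (fun _ => _ * _) _ => apply c_mult
  | |- continuous (fun _ => _ / _) _ => apply c_div
  | |- continuous (fun _ => / _) _ => apply c_inv
  | |- continuous (fun _ => - _) _ => apply c_opp
  | |- continuous (fun _ => _ ^ _) _ => apply c_pow
  | |- continuous (fun y => y) _ => apply c_id
  | |- continuous (fun _ => ?c) _ => apply c_const
  | |- continuous (Rminus ?c) _ => apply (c_minus (fun _ => c) (fun y => y))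
  | |- continuous (Rplus ?c) _ => apply (c_plus (fun _ => c) (fun y => y))
  | |- continuous (Rmult ?c) _ => apply (c_mult (fun _ => c) (fun y => y))
  | |- continuous (A1 ?a ?b) _ => apply A1_cont; auto
  | |- continuous (A2 ?a ?b) _ => apply A2_cont; auto
  | |- continuous (Fc ?a ?b) _ => apply Fc_cont; auto
  | |- continuous (fd ?a ?b) _ => apply fd_cont; auto
  | |- continuous (fun x => A1 ?a ?b x) _ => apply A1_cont; auto
  | |- continuous (fun x => A2 ?a ?b x) _ => apply A2_cont; auto
  | |- continuous (fun x => Fc ?a ?b x) _ => apply Fc_cont; auto
  | |- continuous (fun x => fd ?a ?b x) _ => apply fd_cont; auto
  end.
Ltac cont := repeat cont1.


Ltac exd := repeat match goal with
  | |- _ /\ _ => split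
  | |- True => exact I
  | |- ex_derive (fun x => A1 ?a ?b x) ?y => exists (Fc a b y); apply A1_deriv; auto
  | |- ex_derive (fun x => A2 ?a ?b x) ?y => exists (y * Fc a b y); apply A2_deriv; auto
  | |- ex_derive (fun x => Fc ?a ?b x) ?y => exists (fd a b y); apply Fc_deriv; auto
  | |- ex_derive (fun x => fd ?a ?b x) ?y => exists (fd a b y * dh a b y); apply fd_deriv; auto
  end.

Lemma c_Kfun k1 k2 c y : 0 < k1 -> 0 < k2 ->
  continuous (fun y => Rmin c (Fc k1 k2 y) - c * Fc k1 k2 y) y.
Proof.
  intros. apply c_minus. apply (c_comp (Fc k1 k2) (fun t => Rmin c t)). now apply Fc_cont. apply c_Rmin.
  apply c_mult. apply c_const. now apply Fc_cont.
Qed.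

Lemma exRI_K k1 k2 c a b : 0 < k1 -> 0 < k2 ->
  ex_RInt (fun y => Rmin c (Fc k1 k2 y) - c * Fc k1 k2 y) a b.
Proof. intros. apply (@ex_RInt_continuous R_CompleteNormedModule). intros; now apply c_Kfun. Qed.

Lemma Psi_eq k1 k2 l u x : 0 < k1 -> 0 < k2 -> l <= x <= u ->
  RInt (fun y => Rmin (Fc k1 k2 x) (Fc k1 k2 y) - Fc k1 k2 x * Fc k1 k2 y) l u
  = A1 k1 k2 x - A1 k1 k2 l + (u - x) * Fc k1 k2 x - Fc k1 k2 x * (A1 k1 k2 u - A1 k1 k2 l).
Proof.
  intros H1 H2 Hx. set (c := Fc k1 k2 x).
  rewrite <- (RInt_Chasles _ l x u) by (apply exRI_K; auto).
  rewrite (@RInt_ext R_CompleteNormedModule _ (fun y => Fc k1 k2 y - c * Fc k1 k2 y) l x).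
  2:{ intros y Hy. rewrite Rmin_left, Rmax_right in Hy by lra. f_equal. apply Rmin_right.
      unfold c. apply Fc_le; auto; lra. }
  rewrite (@RInt_ext R_CompleteNormedModule _ (fun y => c - c * Fc k1 k2 y) x u).
  2:{ intros y Hy. rewrite Rmin_left, Rmax_right in Hy by lra. f_equal. apply Rmin_left.
      unfold c. apply Fc_le; auto; lra. }
  rewrite (RInt_FTC (fun y => A1 k1 k2 y - c * A1 k1 k2 y)).
  rewrite (RInt_FTC (fun y => c * y - c * A1 k1 k2 y)).
  unfold plus; simpl. ring.
  - intros y _. auto_derive. eexists; now apply A1_deriv. drw (A1_deriv k1 k2 y H1 H2). ring.
  - intros y _. apply c_minus. apply c_const. apply c_mult. apply c_const. now apply Fc_cont.
  - intros y _. auto_derive. split; [eexists; now apply A1_deriv | split; [eexists; now apply A1_deriv| auto]].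
    drw (A1_deriv k1 k2 y H1 H2). ring.
  - intros y _. apply c_minus. now apply Fc_cont. apply c_mult. apply c_const. now apply Fc_cont.
Qed.

Lemma Gf_eq k1 k2 l u : 0 < k1 -> 0 < k2 -> l <= u ->
  RInt (fun x => A1 k1 k2 x - A1 k1 k2 l + (u - x) * Fc k1 k2 x - Fc k1 k2 x * (A1 k1 k2 u - A1 k1 k2 l)) l u
  = Gf k1 k2 l u.
Proof.
  intros H1 H2 Hlu.
  rewrite (RInt_FTC (fun x => (x * A1 k1 k2 x - A2 k1 k2 x) - x * A1 k1 k2 l + u * A1 k1 k2 x - A2 k1 k2 x
     - (A1 k1 k2 u - A1 k1 k2 l) * A1 k1 k2 x)).
  match goal with |- ?a = ?b => change (@eq R a b) end. unfold Gf. ring.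
  - intros y _. auto_derive. repeat split; exd.
    drw (A1_deriv k1 k2 y H1 H2). drw (A2_deriv k1 k2 y H1 H2). ring.
  - intros y _. cont.
Qed.

Ltac req := try match goal with |- ?a = ?b => change (@eq R a b) end.

Lemma RInt_minus_R (f g : R -> R) a b : ex_RInt f a b -> ex_RInt g a b ->
  RInt (fun x => f x - g x) a b = RInt f a b - RInt g a b.
Proof. intros. exact (@RInt_minus R_CompleteNormedModule f g a b H H0). Qed.

Lemma RInt_scal_R (f : R -> R) a b c : ex_RInt f a b ->
  RInt (fun x => c * f x) a b = c * RInt f a b.
Proof. intros. exact (@RInt_scal R_CompleteNormedModule f a b c H). Qed.

Lemma RInt_div_R (f : R -> R) a b c : ex_RInt f a b ->
  RInt (fun x => f x / c) a b = RInt f a b / c.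
Proof.
  intros. rewrite (@RInt_ext R_CompleteNormedModule _ (fun x => / c * f x)).
  rewrite RInt_scal_R; auto. req. unfold Rdiv; ring.
  intros; req; unfold Rdiv; ring.
Qed.

Lemma inR_between k1 k2 a c s : inR k1 k2 a -> inR k1 k2 c -> a <= s <= c -> inR k1 k2 s.
Proof. intros [u1 [v1 H1]] [u2 [v2 H2]] Hs. exists u1, v2. lra. Qed.

Definition Psi k1 k2 l u s := RInt (fun y => Rmin s (Fc k1 k2 y) - s * Fc k1 k2 y) l u.

Lemma Psi_lip k1 k2 l u s s' : 0 < k1 -> 0 < k2 -> l <= u ->
  (forall y, l <= y <= u -> 0 <= Fc k1 k2 y <= 1) ->
  Rabs (Psi k1 k2 l u s' - Psi k1 k2 l u s) <= (2 * (u - l)) * Rabs (s' - s).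
Proof.
  intros H1 H2 Hlu HF. unfold Psi.
  rewrite <- RInt_minus_R by (apply exRI_K; auto).
  replace (2 * (u - l) * Rabs (s' - s)) with ((u - l) * (2 * Rabs (s' - s))) by ring.
  apply abs_RInt_le_const; auto.
  apply (@ex_RInt_continuous R_CompleteNormedModule). intros; apply c_minus; now apply c_Kfun.
  intros t Ht. specialize (HF t Ht).
  replace (Rmin s' (Fc k1 k2 t) - s' * Fc k1 k2 t - (Rmin s (Fc k1 k2 t) - s * Fc k1 k2 t))
    with ((Rmin s' (Fc k1 k2 t) - Rmin s (Fc k1 k2 t)) - (s' - s) * Fc k1 k2 t) by ring.
  eapply Rle_trans. apply Rabs_triang. rewrite Rabs_Ropp, Rabs_mult.
  assert (Rabs (Rmin s' (Fc k1 k2 t) - Rmin s (Fc k1 k2 t)) <= Rabs (s' - s)).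
  { unfold Rmin. destruct (Rle_dec s' (Fc k1 k2 t)); destruct (Rle_dec s (Fc k1 k2 t)); unfold Rabs;
    repeat destruct Rcase_abs; lra. }
  assert (Rabs (Fc k1 k2 t) <= 1) by (rewrite Rabs_right; lra).
  pose proof (Rabs_pos (s' - s)). nra.
Qed.

Lemma sigma2_eq k1 k2 a b : 0 < k1 -> 0 < k2 -> 0 < a -> 0 < b -> a < 1 - b ->
  inR k1 k2 a -> inR k1 k2 (1 - b) ->
  sigma2 k1 k2 a b = Gf k1 k2 (Qc k1 k2 a) (Qc k1 k2 (1 - b)) / (1 - a - b)^2.
Proof.
  intros H1 H2 Ha Hb Hab Ia Ib.
  set (l := Qc k1 k2 a). set (u := Qc k1 k2 (1 - b)).
  assert (Fl : Fc k1 k2 l = a) by (apply inR_spec; auto).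
  assert (Fu : Fc k1 k2 u = 1 - b) by (apply inR_spec; auto).
  assert (Hlu : l < u) by (apply (Fc_lt_inv k1 k2); auto; lra).
  assert (HFb : forall y, l <= y <= u -> a <= Fc k1 k2 y <= 1 - b).
  { intros y Hy. rewrite <- Fl, <- Fu. split; apply Fc_le; auto; lra. }
  assert (HinR : forall s, a <= s <= 1 - b -> inR k1 k2 s) by (intros s Hs; apply (inR_between k1 k2 a (1 - b) s); auto).
  assert (HinR' : forall y, l <= y <= u -> inR k1 k2 (Fc k1 k2 y)) by (intros; apply HinR, HFb; auto).
  assert (Hhd : forall x, hdens k1 k2 x = fd k1 k2 x) by (intros; apply hdens_eq; auto).
  assert (Hfdn : forall x, fd k1 k2 x <> 0) by (intros; apply Rgt_not_eq, fd_pos; auto).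
  unfold sigma2.
  assert (Inner : forall s, a <= s <= 1 - b ->
    RInt (fun t => (Rmin s t - s * t) / (hdens k1 k2 (hquant k1 k2 s) * hdens k1 k2 (hquant k1 k2 t))) a (1 - b)
    = Psi k1 k2 l u s / fd k1 k2 (Qc k1 k2 s)).
  { intros s Hs. rewrite <- Fl, <- Fu at 1.
    rewrite <- (RInt_comp _ (Fc k1 k2) (fd k1 k2)).
    - unfold Psi. rewrite <- RInt_div_R by (apply exRI_K; auto).
      apply (@RInt_ext R_CompleteNormedModule). intros y Hy.
      rewrite Rmin_left, Rmax_right in Hy by lra.
      unfold scal; simpl; unfold mult; simpl. rewrite !Hhd. fold (Qc k1 k2 (Fc k1 k2 y)).
      rewrite Qc_Fc by auto. fold (Qc k1 k2 s). req. field. split; auto.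
    - intros y Hy. rewrite Rmin_left, Rmax_right in Hy by lra.
      apply continuous_ext with (fun t => (Rmin s t - s * t) / (fd k1 k2 (Qc k1 k2 s) * fd k1 k2 (Qc k1 k2 t))).
      { intros t. rewrite !Hhd. reflexivity. }
      apply c_div. apply c_minus. apply c_Rmin. apply c_mult. apply c_const. apply c_id.
      apply c_mult. apply c_const. apply (c_comp (Qc k1 k2) (fd k1 k2)).
      apply cpt, Qc_cont; auto. now apply fd_cont.
      apply Rmult_integral_contrapositive; auto.
    - intros y Hy. split. now apply Fc_deriv. now apply fd_cont. }
  rewrite (@RInt_ext R_CompleteNormedModule _ (fun s => Psi k1 k2 l u s / fd k1 k2 (Qc k1 k2 s))).
  2:{ intros s Hs. rewrite Rmin_left, Rmax_right in Hs by lra. apply Inner. lra. }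
  replace (RInt (fun s => Psi k1 k2 l u s / fd k1 k2 (Qc k1 k2 s)) a (1 - b))
    with (RInt (fun s => Psi k1 k2 l u s / fd k1 k2 (Qc k1 k2 s)) (Fc k1 k2 l) (Fc k1 k2 u)) by (rewrite Fl, Fu; reflexivity).
  rewrite <- (RInt_comp _ (Fc k1 k2) (fd k1 k2)).
  - rewrite (@RInt_ext R_CompleteNormedModule _ (fun x => A1 k1 k2 x - A1 k1 k2 l + (u - x) * Fc k1 k2 x
        - Fc k1 k2 x * (A1 k1 k2 u - A1 k1 k2 l))).
    + rewrite Gf_eq by (auto; lra). req. unfold Rdiv. ring.
    + intros x Hx. rewrite Rmin_left, Rmax_right in Hx by lra.
      unfold scal; simpl; unfold mult; simpl. rewrite Qc_Fc by auto.
      unfold Psi. rewrite Psi_eq by (auto; lra). req. field. auto.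
  - intros y Hy. rewrite Rmin_left, Rmax_right in Hy by lra.
    apply c_div.
    + apply lip_cont with (2 * (u - l)). lra. intros s'. apply Psi_lip; auto. lra.
      intros z Hz. specialize (HFb z Hz). lra.
    + apply (c_comp (Qc k1 k2) (fd k1 k2)). apply cpt, Qc_cont; auto. now apply fd_cont.
    + auto.
  - intros y Hy. split. now apply Fc_deriv. now apply fd_cont.
Qed.

Definition Lq k1 k2 a := Qc k1 k2 a.
Definition Uq k1 k2 b := Qc k1 k2 (1 - b).
Definition I0q k1 k2 a b := A1 k1 k2 (Uq k1 k2 b) - A1 k1 k2 (Lq k1 k2 a).
Definition I1q k1 k2 a b := Uq k1 k2 b - Lq k1 k2 a - I0q k1 k2 a b.
Definition Nq k1 k2 a b := Gf k1 k2 (Lq k1 k2 a) (Uq k1 k2 b).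
Definition Haq k1 k2 a b := -2 * a * I1q k1 k2 a b / fd k1 k2 (Lq k1 k2 a).
Definition Hbq k1 k2 a b := -2 * b * I0q k1 k2 a b / fd k1 k2 (Uq k1 k2 b).
Definition Haaq k1 k2 a b := -2 * I1q k1 k2 a b / fd k1 k2 (Lq k1 k2 a)
  + 2 * a * dh k1 k2 (Lq k1 k2 a) * I1q k1 k2 a b / (fd k1 k2 (Lq k1 k2 a))^2
  + 2 * a * (1 - a) / (fd k1 k2 (Lq k1 k2 a))^2.
Definition Hbbq k1 k2 a b := -2 * I0q k1 k2 a b / fd k1 k2 (Uq k1 k2 b)
  - 2 * b * dh k1 k2 (Uq k1 k2 b) * I0q k1 k2 a b / (fd k1 k2 (Uq k1 k2 b))^2
  + 2 * b * (1 - b) / (fd k1 k2 (Uq k1 k2 b))^2.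
Definition Habq k1 k2 a b := 2 * a * b / (fd k1 k2 (Lq k1 k2 a) * fd k1 k2 (Uq k1 k2 b)).
Definition Saa k1 k2 a b := Haaq k1 k2 a b / (1 - a - b)^2 + 4 * Haq k1 k2 a b / (1 - a - b)^3
  + 6 * Nq k1 k2 a b / (1 - a - b)^4.
Definition Sbb k1 k2 a b := Hbbq k1 k2 a b / (1 - a - b)^2 + 4 * Hbq k1 k2 a b / (1 - a - b)^3
  + 6 * Nq k1 k2 a b / (1 - a - b)^4.
Definition Sab k1 k2 a b := Habq k1 k2 a b / (1 - a - b)^2
  + 2 * (Haq k1 k2 a b + Hbq k1 k2 a b) / (1 - a - b)^3 + 6 * Nq k1 k2 a b / (1 - a - b)^4.

Definition H0f k1 k2 p q da db t := Nq k1 k2 (p + t * da) (q + t * db) / (1 - (p + t * da) - (q + t * db))^2.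
Definition H1f k1 k2 p q da db t :=
  (da * Haq k1 k2 (p + t * da) (q + t * db) + db * Hbq k1 k2 (p + t * da) (q + t * db))
    / (1 - (p + t * da) - (q + t * db))^2
  + 2 * (da + db) * Nq k1 k2 (p + t * da) (q + t * db) / (1 - (p + t * da) - (q + t * db))^3.
Definition H2f k1 k2 p q da db t :=
  da^2 * Saa k1 k2 (p + t * da) (q + t * db) + 2 * da * db * Sab k1 k2 (p + t * da) (q + t * db)
  + db^2 * Sbb k1 k2 (p + t * da) (q + t * db).

Ltac exd2 := repeat match goal with
  | |- _ /\ _ => split
  | |- True => exact I
  | |- ex_derive (fun x => A1 ?a ?b x) ?y => exists (Fc a b y); apply A1_deriv; auto
  | |- ex_derive (fun x => A2 ?a ?b x) ?y => exists (y * Fc a b y); apply A2_deriv; auto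
  | |- ex_derive (fun x => Fc ?a ?b x) ?y => exists (fd a b y); apply Fc_deriv; auto
  | |- ex_derive (fun x => fd ?a ?b x) ?y => exists (fd a b y * dh a b y); apply fd_deriv; auto
  | |- ex_derive (fun x => Qc ?a ?b x) ?y => exists (/ fd a b (Qc a b y)); apply Qc_deriv; auto
  end.

Lemma H0_deriv k1 k2 p q da db t : 0 < k1 -> 0 < k2 ->
  inR k1 k2 (p + t * da) -> inR k1 k2 (1 - (q + t * db)) -> 1 - (p + t * da) - (q + t * db) <> 0 ->
  is_derive (H0f k1 k2 p q da db) t (H1f k1 k2 p q da db t).
Proof.
  intros H1 H2 Ia Ib HD.
  unfold H0f, H1f, Nq, Haq, Hbq, I1q, I0q, Gf, Lq, Uq.
  auto_derive.
  { exd2. rewrite Rmult_1_r. apply Rmult_integral_contrapositive. unfold Rminus in HD. split; auto. }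
  set (a := p + t * da) in *. set (b := q + t * db) in *.
  set (l := Qc k1 k2 a). set (u := Qc k1 k2 (1 - b)).
  change (1 + - b) with (1 - b). drw (Qc_deriv k1 k2 a H1 H2 Ia). drw (Qc_deriv k1 k2 (1 - b) H1 H2 Ib).
  fold l u.
  drw (A1_deriv k1 k2 l H1 H2). drw (A1_deriv k1 k2 u H1 H2).
  drw (A2_deriv k1 k2 l H1 H2). drw (A2_deriv k1 k2 u H1 H2).
  assert (Fl : Fc k1 k2 l = a) by (apply inR_spec; auto).
  assert (Fu : Fc k1 k2 u = 1 - b) by (apply inR_spec; auto).
  rewrite Fl, Fu.
  assert (fl : fd k1 k2 l <> 0) by (apply Rgt_not_eq, fd_pos; auto).
  assert (fu : fd k1 k2 u <> 0) by (apply Rgt_not_eq, fd_pos; auto).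
  field. auto.
Qed.

Lemma H1_deriv k1 k2 p q da db t : 0 < k1 -> 0 < k2 ->
  inR k1 k2 (p + t * da) -> inR k1 k2 (1 - (q + t * db)) -> 1 - (p + t * da) - (q + t * db) <> 0 ->
  is_derive (H1f k1 k2 p q da db) t (H2f k1 k2 p q da db t).
Proof.
  intros H1 H2 Ia Ib HD.
  assert (fl : fd k1 k2 (Qc k1 k2 (p + t * da)) <> 0) by (apply Rgt_not_eq, fd_pos; auto).
  assert (fu : fd k1 k2 (Qc k1 k2 (1 - (q + t * db))) <> 0) by (apply Rgt_not_eq, fd_pos; auto).
  unfold H1f, H2f, Saa, Sbb, Sab, Haaq, Hbbq, Habq, Nq, Haq, Hbq, I1q, I0q, Gf, Lq, Uq.
  auto_derive.
  { exd2. all: try (rewrite ?Rmult_1_r; repeat apply Rmult_integral_contrapositive; unfold Rminus in HD; repeat split; auto). all: first [apply Rgt_not_eq; apply g0_pos | apply Rinv_neq_0_compat; apply Rgt_not_eq; apply Zc_pos; auto]. }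
  set (a := p + t * da) in *. set (b := q + t * db) in *.
  set (l := Qc k1 k2 a) in *. set (u := Qc k1 k2 (1 - b)) in *.
  change (1 + - b) with (1 - b). fold u.
  drw (Qc_deriv k1 k2 a H1 H2 Ia). drw (Qc_deriv k1 k2 (1 - b) H1 H2 Ib).
  fold l u.
  drw (A1_deriv k1 k2 l H1 H2). drw (A1_deriv k1 k2 u H1 H2).
  drw (A2_deriv k1 k2 l H1 H2). drw (A2_deriv k1 k2 u H1 H2).
  drw (fd_deriv k1 k2 l H1 H2). drw (fd_deriv k1 k2 u H1 H2).
  assert (Fl : Fc k1 k2 l = a) by (apply inR_spec; auto).
  assert (Fu : Fc k1 k2 u = 1 - b) by (apply inR_spec; auto).
  rewrite Fl, Fu.
  field. auto.
Qed.

Definition gs x := exp (- x^2 / 2).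

Lemma gs_deriv x : is_derive gs x (- x * gs x).
Proof. unfold gs. auto_derive; auto. replace (- (x * (x * 1)) * / 2) with (- x^2/2) by (req; field). req. req; field. Qed.
Lemma gs_cont x : continuous gs x.
Proof. apply (ex_derive_continuous gs). eexists; apply gs_deriv. Qed.
Lemma gs_pos x : 0 < gs x.
Proof. apply exp_pos. Qed.

Definition m0 c d := RInt gs c d.
Definition m1 c d := RInt (fun x => x * gs x) c d.
Definition m2 c d := RInt (fun x => x^2 * gs x) c d.

Lemma c_gs1 x : continuous (fun x => x * gs x) x.
Proof. apply c_mult. apply c_id. apply gs_cont. Qed.
Lemma c_gs2 x : continuous (fun x => x^2 * gs x) x.
Proof. apply c_mult. apply c_pow, c_id. apply gs_cont. Qed.

Lemma ex0 c d : ex_RInt gs c d.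
Proof. apply (@ex_RInt_continuous R_CompleteNormedModule). intros; apply gs_cont. Qed.
Lemma ex1 c d : ex_RInt (fun x => x * gs x) c d.
Proof. apply (@ex_RInt_continuous R_CompleteNormedModule). intros; apply c_gs1. Qed.
Lemma ex2 c d : ex_RInt (fun x => x^2 * gs x) c d.
Proof. apply (@ex_RInt_continuous R_CompleteNormedModule). intros; apply c_gs2. Qed.

Lemma m1_eq c d : m1 c d = gs c - gs d.
Proof.
  unfold m1. rewrite (RInt_FTC (fun x => - gs x)). req; ring.
  intros. auto_derive. eexists; apply gs_deriv. drw (gs_deriv x). req; ring.
  intros; apply c_gs1.
Qed.

Lemma m2_eq c d : m2 c d = m0 c d + c * gs c - d * gs d.
Proof.
  unfold m2, m0.
  assert (E : RInt (fun x => x^2 * gs x - gs x) c d = c * gs c - d * gs d).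
  { rewrite (RInt_FTC (fun x => - x * gs x)). req; ring.
    intros. auto_derive. eexists; apply gs_deriv. drw (gs_deriv x). req; ring.
    intros; apply c_minus. apply c_gs2. apply gs_cont. }
  rewrite RInt_minus_R in E by (apply ex2 || apply ex0). lra.
Qed.

Lemma m_chasles (f : R -> R) a b c : (forall x, continuous f x) ->
  RInt f a b + RInt f b c = RInt f a c.
Proof.
  intros. apply (@RInt_Chasles R_CompleteNormedModule);
  apply (@ex_RInt_continuous R_CompleteNormedModule); auto.
Qed.

Lemma m0_pos c d : c < d -> 0 < m0 c d.
Proof. intros. apply RInt_gt_0; auto. intros; apply gs_pos. intros; apply gs_cont. Qed.
Lemma m0_nonneg c d : c <= d -> 0 <= m0 c d.
Proof. intros. destruct H. left; now apply m0_pos. subst. unfold m0. rewrite RInt_point. right; reflexivity. Qed.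
Lemma m2_pos c d : c < d -> (d <= 0 \/ 0 <= c) -> 0 < m2 c d.
Proof.
  intros Hcd Hs. unfold m2. apply RInt_gt_0; auto.
  2: intros; apply c_gs2.
  intros x Hx. apply Rmult_lt_0_compat. 2: apply gs_pos.
  destruct Hs; nra.
Qed.

Lemma m2_nonneg c d : c <= d -> 0 <= m2 c d.
Proof.
  intros. unfold m2. apply RInt_ge_0; auto. apply ex2.
  intros. pose proof (gs_pos x). nra.
Qed.

Lemma RInt_plus_R (f g : R -> R) a b : ex_RInt f a b -> ex_RInt g a b ->
  RInt (fun x => f x + g x) a b = RInt f a b + RInt g a b.
Proof. intros. exact (@RInt_plus R_CompleteNormedModule f g a b H H0). Qed.

Lemma exc (f : R -> R) a b : (forall x, continuous f x) -> ex_RInt f a b.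
Proof. intros. apply (@ex_RInt_continuous R_CompleteNormedModule). auto. Qed.

Lemma CS c d : c <= d -> (m1 c d)^2 <= m0 c d * m2 c d.
Proof.
  intros Hcd. destruct Hcd as [Hcd | Hcd].
  2:{ subst. unfold m0, m1, m2. rewrite !RInt_point. simpl. right. unfold zero; simpl. req; ring. }
  pose proof (m0_pos c d Hcd) as H0.
  set (lam := m1 c d / m0 c d).
  assert (Hq : 0 <= RInt (fun x => (x - lam)^2 * gs x) c d).
  { apply RInt_ge_0. lra. apply exc. intros; apply c_mult. apply c_pow. apply c_minus. apply c_id. apply c_const.
    apply gs_cont. intros. pose proof (gs_pos x). apply Rmult_le_pos. apply pow2_ge_0. lra. }
  rewrite (@RInt_ext R_CompleteNormedModule _ (fun x => (x^2 * gs x + (-2 * lam) * (x * gs x)) + lam^2 * gs x)) in Hq.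
  2:{ intros; req; ring. }
  rewrite RInt_plus_R in Hq.
  2:{ apply exc. intros. apply c_plus. apply c_gs2. apply c_mult. apply c_const. apply c_gs1. }
  2:{ apply exc. intros. apply c_mult. apply c_const. apply gs_cont. }
  rewrite RInt_plus_R in Hq by first [apply ex2 | (apply exc; intros; apply c_mult; [apply c_const | apply c_gs1])].
  rewrite RInt_scal_R in Hq by apply ex1.
  rewrite RInt_scal_R in Hq by apply ex0.
  fold (m0 c d) (m1 c d) (m2 c d) in Hq.
  unfold lam in Hq.
  assert (E : m2 c d + -2 * (m1 c d / m0 c d) * m1 c d + (m1 c d / m0 c d)^2 * m0 c d
     = (m0 c d * m2 c d - (m1 c d)^2) / m0 c d) by (field; lra).
  rewrite E in Hq.
  assert (0 <= m0 c d * m2 c d - m1 c d ^ 2).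
  { apply Rmult_le_reg_r with (/ m0 c d). apply Rinv_0_lt_compat; auto. rewrite Rmult_0_l. exact Hq. }
  lra.
Qed.

Lemma gs_even x : gs (- x) = gs x.
Proof. unfold gs. f_equal. req. req; field. Qed.

Lemma crit k1 k2 : 0 < k1 -> 0 < k2 ->
  m0 (- k1) k2 > k1 * gs k1 + k2 * gs k2 /\
  m0 (- k1) k2 * (m0 (- k1) k2 - k1 * gs k1 - k2 * gs k2) > (gs k1 - gs k2)^2.
Proof.
  intros H1 H2.
  assert (EJ : m0 (-k1) 0 + m0 0 k2 = m0 (-k1) k2) by (unfold m0; apply m_chasles; apply gs_cont).
  assert (d1 : m2 (-k1) 0 = m0 (-k1) 0 - k1 * gs k1).
  { rewrite m2_eq, gs_even. req; ring. }
  assert (d2 : m2 0 k2 = m0 0 k2 - k2 * gs k2).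
  { rewrite m2_eq. req; ring. }
  assert (p1 : 0 < m2 (-k1) 0) by (apply m2_pos; lra).
  assert (p2 : 0 < m2 0 k2) by (apply m2_pos; lra).
  assert (q1 : 0 < m0 (-k1) 0) by (apply m0_pos; lra).
  assert (q2 : 0 < m0 0 k2) by (apply m0_pos; lra).
  split. lra.
  replace (m0 (-k1) k2 - k1 * gs k1 - k2 * gs k2) with (m2 (-k1) 0 + m2 0 k2) by lra.
  destruct (Rle_dec k2 k1).
  - assert (E1 : m1 (-k1) (-k2) = gs k1 - gs k2) by (rewrite m1_eq, !gs_even; reflexivity).
    pose proof (CS (-k1) (-k2) ltac:(lra)) as HCS. rewrite E1 in HCS.
    assert (C0 : m0 (-k1) (-k2) + m0 (-k2) 0 = m0 (-k1) 0) by (unfold m0; apply m_chasles; apply gs_cont).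
    assert (C2 : m2 (-k1) (-k2) + m2 (-k2) 0 = m2 (-k1) 0) by (unfold m2; apply m_chasles; apply c_gs2).
    pose proof (m0_nonneg (-k2) 0 ltac:(lra)). pose proof (m2_nonneg (-k2) 0 ltac:(lra)).
    pose proof (m0_nonneg (-k1) (-k2) ltac:(lra)). pose proof (m2_nonneg (-k1) (-k2) ltac:(lra)).
    assert (m0 (-k1) (-k2) * m2 (-k1) (-k2) <= m0 (-k1) 0 * m2 (-k1) 0).
    { apply Rmult_le_compat; lra. }
    assert (m0 (-k1) 0 * m2 (-k1) 0 < m0 (-k1) k2 * (m2 (-k1) 0 + m2 0 k2)).
    { nra. }
    lra.
  - assert (E1 : m1 k1 k2 = gs k1 - gs k2) by (rewrite m1_eq; reflexivity).
    pose proof (CS k1 k2 ltac:(lra)) as HCS. rewrite E1 in HCS.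
    assert (C0 : m0 0 k1 + m0 k1 k2 = m0 0 k2) by (unfold m0; apply m_chasles; apply gs_cont).
    assert (C2 : m2 0 k1 + m2 k1 k2 = m2 0 k2) by (unfold m2; apply m_chasles; apply c_gs2).
    pose proof (m0_nonneg 0 k1 ltac:(lra)). pose proof (m2_nonneg 0 k1 ltac:(lra)).
    pose proof (m0_nonneg k1 k2 ltac:(lra)). pose proof (m2_nonneg k1 k2 ltac:(lra)).
    assert (m0 k1 k2 * m2 k1 k2 <= m0 0 k2 * m2 0 k2).
    { apply Rmult_le_compat; lra. }
    assert (m0 0 k2 * m2 0 k2 < m0 (-k1) k2 * (m2 (-k1) 0 + m2 0 k2)).
    { nra. }
    lra.
Qed.

Lemma PDalg k1 k2 P Q J : 0 < k1 -> 0 < k2 -> 0 < P -> 0 < Q -> 0 < J ->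
  J > k1 * P + k2 * Q -> J * (J - k1 * P - k2 * Q) > (P - Q)^2 ->
  let Z := P / k1 + J + Q / k2 in
  let x := (J + Q / k2) / (k1 * P) - Z / J in
  let y := (J + P / k1) / (k2 * Q) - Z / J in
  let z := 1 / (k1 * k2) - Z / J in
  0 < x /\ 0 < y /\ 0 < x * y - z^2.
Proof.
  intros h1 h2 hP hQ hJ c1 c2 Z x y z.
  assert (Hdet : x * y - z^2 = Z / (k1 * k2 * P * Q * J) * (J^2 - J * (k1 * P + k2 * Q) - (P - Q)^2)).
  { unfold x, y, z, Z. field. repeat split; lra. }
  assert (HZ : 0 < Z) by (unfold Z; assert (0 < P / k1) by (apply Rdiv_lt_0_compat; lra);
     assert (0 < Q / k2) by (apply Rdiv_lt_0_compat; lra); lra).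
  assert (Pdet : 0 < x * y - z^2).
  { rewrite Hdet. apply Rmult_lt_0_compat. apply Rdiv_lt_0_compat; auto.
    repeat apply Rmult_lt_0_compat; auto. nra. }
  assert (Hx : x * (k1 * P * J) = (J - k1 * P) * (J + Q / k2) - P^2).
  { unfold x, Z. field. repeat split; lra. }
  assert (Hy : y * (k2 * Q * J) = (J - k2 * Q) * (J + P / k1) - Q^2).
  { unfold y, Z. field. repeat split; lra. }
  assert (HQk : Q / k2 * (J - k1 * P) > Q^2).
  { assert (E : Q / k2 * (J - k1 * P) - Q^2 = Q / k2 * (J - k1 * P - k2 * Q)) by (field; lra).
    assert (0 < Q / k2 * (J - k1 * P - k2 * Q)) by (apply Rmult_lt_0_compat; [apply Rdiv_lt_0_compat|]; lra). lra. }
  assert (HPk : P / k1 * (J - k2 * Q) > P^2).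
  { assert (E : P / k1 * (J - k2 * Q) - P^2 = P / k1 * (J - k1 * P - k2 * Q)) by (field; lra).
    assert (0 < P / k1 * (J - k1 * P - k2 * Q)) by (apply Rmult_lt_0_compat; [apply Rdiv_lt_0_compat|]; lra). lra. }
  destruct (Rle_dec P Q).
  - assert (Xp : 0 < x).
    { assert (0 < x * (k1 * P * J)).
      { rewrite Hx. assert (J * (J - k1 * P) > J * k2 * Q + (P - Q)^2) by nra.
        assert (0 <= Q * (J * k2 + 2 * (Q - P))) by (apply Rmult_le_pos; nra). nra. }
      assert (0 < k1 * P * J) by (repeat apply Rmult_lt_0_compat; auto). nra. }
    split; auto. split; auto.
    assert (0 <= z^2) by nra. nra.
  - assert (Yp : 0 < y).
    { assert (0 < y * (k2 * Q * J)).
      { rewrite Hy. assert (J * (J - k2 * Q) > J * k1 * P + (P - Q)^2) by nra.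
        assert (0 <= P * (J * k1 + 2 * (P - Q))) by (apply Rmult_le_pos; nra). nra. }
      assert (0 < k2 * Q * J) by (repeat apply Rmult_lt_0_compat; auto). nra. }
    split; auto.
    assert (0 <= z^2) by nra. nra.
Qed.

Definition astar k1 k2 := Fc k1 k2 (- k1).
Definition bstar k1 k2 := 1 - Fc k1 k2 k2.

Lemma g0_m k1 k2 x : 0 < k1 -> 0 < k2 -> - k1 <= x <= k2 -> g0 k1 k2 x = gs x.
Proof. intros. unfold g0, gs. rewrite hlog_mid by auto. reflexivity. Qed.

Lemma Jx_k2 k1 k2 : 0 < k1 -> 0 < k2 -> Jx k1 k2 k2 = m0 (- k1) k2.
Proof.
  intros. unfold Jx, m0. apply (@RInt_ext R_CompleteNormedModule). intros x Hx.
  rewrite Rmin_left, Rmax_right in Hx by lra. apply g0_m; auto; lra.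
Qed.

Lemma Jx_m1 k1 k2 : Jx k1 k2 (- k1) = 0.
Proof. unfold Jx. rewrite RInt_point. reflexivity. Qed.

Lemma Zc_eq k1 k2 : 0 < k1 -> 0 < k2 -> Zc k1 k2 = gs k1 / k1 + m0 (- k1) k2 + gs k2 / k2.
Proof.
  intros. unfold Zc, Ef. rewrite Jx_k2 by auto. rewrite !g0_m by (auto; lra). rewrite gs_even. reflexivity.
Qed.

Lemma Fc_m1 k1 k2 : 0 < k1 -> 0 < k2 -> Fc k1 k2 (- k1) = gs k1 / (k1 * Zc k1 k2).
Proof.
  intros. unfold Fc, Ef. rewrite Jx_m1, g0_m, gs_even by (auto; lra). field.
  split. apply Rgt_not_eq, Zc_pos; auto. lra.
Qed.

Lemma Fc_k2 k1 k2 : 0 < k1 -> 0 < k2 -> 1 - Fc k1 k2 k2 = gs k2 / (k2 * Zc k1 k2).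
Proof.
  intros. pose proof (Zc_pos k1 k2 H H0).
  unfold Fc. rewrite (Ef_right k1 k2 k2) by (auto; lra). rewrite g0_m by (auto; lra). field. lra.
Qed.

Lemma fd_m1 k1 k2 : 0 < k1 -> 0 < k2 -> fd k1 k2 (- k1) = gs k1 / Zc k1 k2.
Proof. intros. unfold fd. rewrite g0_m, gs_even by (auto; lra). reflexivity. Qed.
Lemma fd_k2 k1 k2 : 0 < k1 -> 0 < k2 -> fd k1 k2 k2 = gs k2 / Zc k1 k2.
Proof. intros. unfold fd. rewrite g0_m by (auto; lra). reflexivity. Qed.

Lemma A1_diff k1 k2 l u : 0 < k1 -> 0 < k2 -> A1 k1 k2 u - A1 k1 k2 l = RInt (Fc k1 k2) l u.
Proof.
  intros. unfold A1. rewrite <- (m_chasles (Fc k1 k2) 0 l u). ring.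
  intros; apply Fc_cont; auto.
Qed.
Lemma A2_diff k1 k2 l u : 0 < k1 -> 0 < k2 -> A2 k1 k2 u - A2 k1 k2 l = RInt (fun y => y * Fc k1 k2 y) l u.
Proof.
  intros. unfold A2. rewrite <- (m_chasles (fun y => y * Fc k1 k2 y) 0 l u). ring.
  intros; apply c_xFc; auto.
Qed.

Lemma I0_star k1 k2 : 0 < k1 -> 0 < k2 -> A1 k1 k2 k2 - A1 k1 k2 (- k1) = k2.
Proof.
  intros H1 H2. pose proof (Zc_pos k1 k2 H1 H2).
  rewrite A1_diff by auto.
  rewrite (RInt_FTC (fun x => (g0 k1 k2 (-k1) / k1 * x + x * Jx k1 k2 x + g0 k1 k2 x) / Zc k1 k2)).
  - rewrite Jx_m1. req. match goal with |- ?A / ?z - ?B / ?z = ?c =>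
      replace (A / z - B / z) with ((A - B) / z) by (field; lra);
      replace (A - B) with (c * z) by (unfold Zc, Ef; field; lra) end. field. lra.
  - intros x Hx. rewrite Rmin_left, Rmax_right in Hx by lra.
    auto_derive. split. eexists; now apply Jx_deriv. split. eexists; now apply g0_deriv. auto.
    drw (Jx_deriv k1 k2 x H1 H2). drw (g0_deriv k1 k2 x H1 H2). rewrite dh_mid by auto.
    unfold Fc, Ef. field. lra.
  - intros; apply Fc_cont; auto.
Qed.

Lemma I2_star k1 k2 : 0 < k1 -> 0 < k2 ->
  A2 k1 k2 k2 - A2 k1 k2 (- k1) = (k2^2 - Jx k1 k2 k2 / Zc k1 k2) / 2.
Proof.
  intros H1 H2. pose proof (Zc_pos k1 k2 H1 H2).
  rewrite A2_diff by auto.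
  rewrite (RInt_FTC (fun x => (g0 k1 k2 (-k1) / k1 * x^2 / 2 + (x^2 - 1) / 2 * Jx k1 k2 x + x * g0 k1 k2 x / 2) / Zc k1 k2)).
  - rewrite Jx_m1. req. match goal with |- ?A / ?z - ?B / ?z = ?c =>
      replace (A / z - B / z) with ((A - B) / z) by (field; lra);
      replace (A - B) with (k2^2 / 2 * z - Jx k1 k2 k2 / 2) by (unfold Zc, Ef; field; lra) end. field. lra.
  - intros x Hx. rewrite Rmin_left, Rmax_right in Hx by lra.
    auto_derive. split. eexists; now apply Jx_deriv. split. eexists; now apply g0_deriv. auto.
    drw (Jx_deriv k1 k2 x H1 H2). drw (g0_deriv k1 k2 x H1 H2). rewrite dh_mid by auto.
    unfold Fc, Ef. field. lra.
  - intros; apply c_xFc; auto.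
Qed.

Lemma Lq_star k1 k2 : 0 < k1 -> 0 < k2 -> Lq k1 k2 (astar k1 k2) = - k1.
Proof. intros. unfold Lq, astar. apply Qc_Fc; auto. Qed.
Lemma Uq_star k1 k2 : 0 < k1 -> 0 < k2 -> Uq k1 k2 (bstar k1 k2) = k2.
Proof. intros. unfold Uq, bstar. replace (1 - (1 - Fc k1 k2 k2)) with (Fc k1 k2 k2) by ring. apply Qc_Fc; auto. Qed.

Lemma star_entries k1 k2 : 0 < k1 -> 0 < k2 ->
  let P := gs k1 in let Q := gs k2 in let J := m0 (- k1) k2 in
  let Z := P / k1 + J + Q / k2 in
  let c := 2 / (J / Z)^2 in
  Saa k1 k2 (astar k1 k2) (bstar k1 k2) = c * ((J + Q / k2) / (k1 * P) - Z / J) /\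
  Sbb k1 k2 (astar k1 k2) (bstar k1 k2) = c * ((J + P / k1) / (k2 * Q) - Z / J) /\
  Sab k1 k2 (astar k1 k2) (bstar k1 k2) = c * (1 / (k1 * k2) - Z / J).
Proof.
  intros H1 H2 P Q J Z c.
  assert (HP : 0 < P) by apply gs_pos. assert (HQ : 0 < Q) by apply gs_pos.
  assert (HJ : 0 < J) by (apply m0_pos; lra).
  assert (HZ : 0 < Z) by (unfold Z; assert (0 < P / k1) by (apply Rdiv_lt_0_compat; lra);
     assert (0 < Q / k2) by (apply Rdiv_lt_0_compat; lra); lra).
  assert (HPk : 0 < P / k1) by (apply Rdiv_lt_0_compat; lra).
  assert (HQk : 0 < Q / k2) by (apply Rdiv_lt_0_compat; lra).
  assert (EZ : Zc k1 k2 = Z) by (unfold Z; apply Zc_eq; auto).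
  assert (Ea : astar k1 k2 = P / (k1 * Z)) by (unfold astar; rewrite Fc_m1, EZ; auto).
  assert (Eb : bstar k1 k2 = Q / (k2 * Z)) by (unfold bstar; rewrite Fc_k2, EZ; auto).
  assert (E0 : I0q k1 k2 (astar k1 k2) (bstar k1 k2) = k2).
  { unfold I0q. rewrite Lq_star, Uq_star by auto. apply I0_star; auto. }
  assert (E1 : I1q k1 k2 (astar k1 k2) (bstar k1 k2) = k1).
  { unfold I1q. rewrite E0, Lq_star, Uq_star by auto. ring. }
  assert (EN : Nq k1 k2 (astar k1 k2) (bstar k1 k2) = J / Z).
  { unfold Nq, Gf. rewrite Lq_star, Uq_star by auto. rewrite I0_star, I2_star by auto.
    rewrite Jx_k2, EZ by auto. fold J. field. lra. }
  assert (Efl : fd k1 k2 (Lq k1 k2 (astar k1 k2)) = P / Z) by (rewrite Lq_star, fd_m1, EZ; auto).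
  assert (Efu : fd k1 k2 (Uq k1 k2 (bstar k1 k2)) = Q / Z) by (rewrite Uq_star, fd_k2, EZ; auto).
  assert (Edl : dh k1 k2 (Lq k1 k2 (astar k1 k2)) = k1) by (rewrite Lq_star by auto; apply dh_left; auto; lra).
  assert (Edu : dh k1 k2 (Uq k1 k2 (bstar k1 k2)) = - k2) by (rewrite Uq_star by auto; apply dh_right; auto; lra).
  unfold Saa, Sbb, Sab, Haaq, Hbbq, Habq, Haq, Hbq.
  rewrite E0, E1, EN, Efl, Efu, Edl, Edu, Ea, Eb.
  assert (ED : 1 - P / (k1 * Z) - Q / (k2 * Z) = J / Z).
  { replace (1 - P / (k1 * Z) - Q / (k2 * Z)) with ((Z - P / k1 - Q / k2) / Z) by (field; repeat split; lra).
    f_equal. unfold Z; ring. }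
  rewrite ED. unfold c.
  assert (HZne : P / k1 + J + Q / k2 <> 0) by lra.
  assert (0 < (P + J * k1) * k2 + Q * k1).
  { assert (0 < (P + J * k1) * k2) by (apply Rmult_lt_0_compat; nra). nra. }
  repeat split; unfold Z; field; repeat split; lra.
Qed.

Lemma star_PD k1 k2 : 0 < k1 -> 0 < k2 ->
  0 < Saa k1 k2 (astar k1 k2) (bstar k1 k2) /\ 0 < Sbb k1 k2 (astar k1 k2) (bstar k1 k2) /\
  0 < Saa k1 k2 (astar k1 k2) (bstar k1 k2) * Sbb k1 k2 (astar k1 k2) (bstar k1 k2)
      - (Sab k1 k2 (astar k1 k2) (bstar k1 k2))^2.
Proof.
  intros H1 H2. destruct (star_entries k1 k2 H1 H2) as [Ex [Ey Ez]].
  destruct (crit k1 k2 H1 H2) as [c1 c2].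
  assert (HP : 0 < gs k1) by apply gs_pos. assert (HQ : 0 < gs k2) by apply gs_pos.
  assert (HJ : 0 < m0 (-k1) k2) by (apply m0_pos; lra).
  destruct (PDalg k1 k2 (gs k1) (gs k2) (m0 (-k1) k2) H1 H2 HP HQ HJ c1 c2) as [px [py pd]].
  rewrite Ex, Ey, Ez.
  set (Z := gs k1 / k1 + m0 (- k1) k2 + gs k2 / k2) in *.
  assert (HZ : 0 < Z) by (unfold Z; assert (0 < gs k1 / k1) by (apply Rdiv_lt_0_compat; lra);
     assert (0 < gs k2 / k2) by (apply Rdiv_lt_0_compat; lra); lra).
  assert (Hc : 0 < 2 / (m0 (- k1) k2 / Z)^2).
  { assert (0 < m0 (- k1) k2 / Z) by (apply Rdiv_lt_0_compat; lra).
    assert (0 < (m0 (- k1) k2 / Z)^2) by (apply pow_lt; lra).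
    apply Rdiv_lt_0_compat; lra. }
  set (c := 2 / (m0 (- k1) k2 / Z)^2) in *.
  set (x := (m0 (- k1) k2 + gs k2 / k2) / (k1 * gs k1) - Z / m0 (- k1) k2) in *.
  set (y := (m0 (- k1) k2 + gs k1 / k1) / (k2 * gs k2) - Z / m0 (- k1) k2) in *.
  set (z := 1 / (k1 * k2) - Z / m0 (- k1) k2) in *.
  assert (A : 0 < c * x) by (apply Rmult_lt_0_compat; assumption).
  assert (B : 0 < c * y) by (apply Rmult_lt_0_compat; assumption).
  assert (C : 0 < c^2 * (x * y - z^2)) by (apply Rmult_lt_0_compat; [apply pow_lt; exact Hc | exact pd]).
  split; [exact A | split; [exact B | ]].
  replace (c * x * (c * y) - (c * z)^2) with (c^2 * (x * y - z^2)) by ring. exact C.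
Qed.

Lemma cont2_eps (F : R * R -> R) a0 b0 : continuous F (a0, b0) ->
  forall eta, 0 < eta -> exists del, 0 < del /\ forall a b, Rabs (a - a0) < del -> Rabs (b - b0) < del ->
  Rabs (F (a, b) - F (a0, b0)) < eta.
Proof.
  intros HF eta He.
  destruct (HF (ball (F (a0, b0)) eta)) as [del Hdel].
  { exists (mkposreal _ He). intros y Hy. exact Hy. }
  exists del. split. apply cond_pos. intros a b Ha Hb.
  apply (Hdel (a, b)). split; simpl; exact Ha || exact Hb.
Qed.

Lemma astar_inR k1 k2 : 0 < k1 -> 0 < k2 -> inR k1 k2 (astar k1 k2).
Proof. intros. exists (-k1 - 1), 0. unfold astar. split; apply Fc_strict; auto; lra. Qed.
Lemma bstar_inR k1 k2 : 0 < k1 -> 0 < k2 -> inR k1 k2 (1 - bstar k1 k2).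
Proof. intros. exists 0, (k2 + 1). unfold bstar. replace (1 - (1 - Fc k1 k2 k2)) with (Fc k1 k2 k2) by ring.
  split; apply Fc_strict; auto; lra. Qed.

Lemma cL k1 k2 b0 : 0 < k1 -> 0 < k2 ->
  continuous (fun p : R * R => Qc k1 k2 (fst p)) (astar k1 k2, b0).
Proof.
  intros. apply (c_comp (fun p : R * R => fst p) (Qc k1 k2)).
  apply continuous_fst. simpl. apply cpt, Qc_cont; auto. apply astar_inR; auto.
Qed.
Lemma cU k1 k2 a0 : 0 < k1 -> 0 < k2 ->
  continuous (fun p : R * R => Qc k1 k2 (1 - snd p)) (a0, bstar k1 k2).
Proof.
  intros. apply (c_comp (fun p : R * R => 1 - snd p) (Qc k1 k2)).
  apply c_minus. apply c_const. apply continuous_snd. simpl. apply cpt, Qc_cont; auto. apply bstar_inR; auto.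
Qed.

Lemma Dstar_pos k1 k2 : 0 < k1 -> 0 < k2 -> 0 < 1 - astar k1 k2 - bstar k1 k2.
Proof. intros. unfold astar, bstar. assert (Fc k1 k2 (-k1) < Fc k1 k2 k2) by (apply Fc_strict; auto; lra). lra. Qed.

Ltac nz := repeat match goal with
  | |- _ * _ <> 0 => apply Rmult_integral_contrapositive; split
  | |- 1 <> 0 => apply R1_neq_R0
  | |- fd ?a ?b _ <> 0 => apply Rgt_not_eq, fd_pos; auto
  | |- 1 - astar ?a ?b - bstar ?a ?b <> 0 => apply Rgt_not_eq, Dstar_pos; auto
  end.

Ltac cont2 := repeat (first
  [ match goal with
    | |- continuous (fun p => Qc ?a ?b (fst p)) _ => apply cL; auto
    | |- continuous (fun p => Qc ?a ?b (1 - snd p)) _ => apply cU; auto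
    | |- continuous (fun p => ?g (Qc ?a ?b (fst p))) _ =>
        apply (c_comp (fun p => Qc a b (fst p)) g); [apply cL; auto | simpl ]
    | |- continuous (fun p => ?g (Qc ?a ?b (1 - snd p))) _ =>
        apply (c_comp (fun p => Qc a b (1 - snd p)) g); [apply cU; auto | simpl ]
    | |- continuous (fun p => fst p) _ => apply continuous_fst
    | |- continuous (fun p => snd p) _ => apply continuous_snd
    | |- continuous fst _ => apply continuous_fst
    | |- continuous snd _ => apply continuous_snd
    | |- continuous (dh ?a ?b) _ => apply dh_cont; auto
    end
  | cont1 ]).

Lemma Saa_cont k1 k2 : 0 < k1 -> 0 < k2 ->
  continuous (fun p : R * R => Saa k1 k2 (fst p) (snd p)) (astar k1 k2, bstar k1 k2).
Proof.
  intros H1 H2.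
  unfold Saa, Haaq, Haq, Nq, I1q, I0q, Gf, Lq, Uq.
  cont2; simpl; nz.
Qed.

Lemma Sbb_cont k1 k2 : 0 < k1 -> 0 < k2 ->
  continuous (fun p : R * R => Sbb k1 k2 (fst p) (snd p)) (astar k1 k2, bstar k1 k2).
Proof.
  intros H1 H2.
  unfold Sbb, Hbbq, Hbq, Nq, I1q, I0q, Gf, Lq, Uq.
  cont2; simpl; nz.
Qed.

Lemma Sab_cont k1 k2 : 0 < k1 -> 0 < k2 ->
  continuous (fun p : R * R => Sab k1 k2 (fst p) (snd p)) (astar k1 k2, bstar k1 k2).
Proof.
  intros H1 H2.
  unfold Sab, Habq, Haq, Hbq, Nq, I1q, I0q, Gf, Lq, Uq.
  cont2; simpl; nz.
Qed.

Lemma conv1 (h h1 h2 : R -> R) t0 : 0 < t0 < 1 ->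
  (forall t, 0 <= t <= 1 -> is_derive h t (h1 t) /\ is_derive h1 t (h2 t) /\ 0 < h2 t) ->
  h t0 < t0 * h 1 + (1 - t0) * h 0.
Proof.
  intros Ht H.
  destruct (MVT_cor2 h h1 0 t0) as [c1 [E1 Hc1]]. lra.
  { intros c Hc. apply is_derive_Reals. apply H; lra. }
  destruct (MVT_cor2 h h1 t0 1) as [c2 [E2 Hc2]]. lra.
  { intros c Hc. apply is_derive_Reals. apply H; lra. }
  destruct (MVT_cor2 h1 h2 c1 c2) as [c3 [E3 Hc3]]. lra.
  { intros c Hc. apply is_derive_Reals. apply H; lra. }
  assert (P3 : 0 < h2 c3) by (apply H; lra).
  assert (h1 c1 < h1 c2) by nra.
  assert (0 < t0 * (1 - t0)) by nra.
  nra.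
Qed.

Lemma form_lb sx sy sz da db : 0 < sx -> 0 < sy -> 0 < sx * sy - sz^2 ->
  (sx * sy - sz^2) / (sx + sy) * (da^2 + db^2) <= sx * da^2 + 2 * sz * da * db + sy * db^2.
Proof.
  intros hx hy hd. set (mu := (sx * sy - sz^2) / (sx + sy)).
  assert (E1 : (sx - mu) * (sy - mu) - sz^2 = mu^2) by (unfold mu; field; lra).
  assert (E2 : sx - mu = (sx^2 + sz^2) / (sx + sy)) by (unfold mu; field; lra).
  assert (A : 0 < sx - mu) by (rewrite E2; apply Rdiv_lt_0_compat; nra).
  assert (B : 0 <= (sx - mu) * da^2 + 2 * sz * da * db + (sy - mu) * db^2).
  { apply Rmult_le_reg_l with (sx - mu); auto. rewrite Rmult_0_r.
    replace ((sx - mu) * ((sx - mu) * da ^ 2 + 2 * sz * da * db + (sy - mu) * db ^ 2))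
      with (((sx - mu) * da + sz * db)^2 + ((sx - mu) * (sy - mu) - sz^2) * db^2) by ring.
    rewrite E1. apply Rplus_le_le_0_compat; [apply pow2_ge_0 | apply Rmult_le_pos; apply pow2_ge_0]. }
  fold mu. lra.
Qed.

Lemma seg_close a1 a2 a0 eps t : Rabs (a1 - a0) < eps -> Rabs (a2 - a0) < eps -> 0 <= t <= 1 ->
  Rabs (a2 + t * (a1 - a2) - a0) < eps.
Proof.
  intros. replace (a2 + t * (a1 - a2) - a0) with (t * (a1 - a0) + (1 - t) * (a2 - a0)) by ring.
  eapply Rle_lt_trans. apply Rabs_triang. rewrite !Rabs_mult, (Rabs_right t), (Rabs_right (1 - t)) by lra.
  set (x1 := Rabs (a1 - a0)) in *. set (x2 := Rabs (a2 - a0)) in *.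
  assert (t * x1 <= t * Rmax x1 x2) by (apply Rmult_le_compat_l; [lra | apply Rmax_l]).
  assert ((1 - t) * x2 <= (1 - t) * Rmax x1 x2) by (apply Rmult_le_compat_l; [lra | apply Rmax_r]).
  assert (Rmax x1 x2 < eps) by (apply Rmax_lub_lt; auto).
  lra.
Qed.

Lemma pert A B C sx sy sz eta da db : Rabs (A - sx) < eta -> Rabs (B - sy) < eta -> Rabs (C - sz) < eta ->
  sx * da^2 + 2 * sz * da * db + sy * db^2 - 2 * eta * (da^2 + db^2) <= A * da^2 + 2 * C * da * db + B * db^2.
Proof.
  intros HA HB HC.
  assert (Hd : Rabs (2 * da * db) <= da^2 + db^2).
  { pose proof (pow2_ge_0 (da - db)). pose proof (pow2_ge_0 (da + db)).
    unfold Rabs; destruct Rcase_abs; nra. }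
  assert (E1 : - eta * da^2 <= (A - sx) * da^2).
  { apply Rmult_le_compat_r. apply pow2_ge_0. unfold Rabs in HA; destruct Rcase_abs in HA; lra. }
  assert (E2 : - eta * db^2 <= (B - sy) * db^2).
  { apply Rmult_le_compat_r. apply pow2_ge_0. unfold Rabs in HB; destruct Rcase_abs in HB; lra. }
  assert (E3 : - (eta * (da^2 + db^2)) <= (C - sz) * (2 * da * db)).
  { assert (Rabs ((C - sz) * (2 * da * db)) <= eta * (da^2 + db^2)).
    { rewrite Rabs_mult. apply Rmult_le_compat; try apply Rabs_pos; lra. }
    unfold Rabs in H; destruct Rcase_abs in H; lra. }
  assert (0 <= eta) by (pose proof (Rabs_pos (A - sx)); lra).
  assert (0 <= da^2) by apply pow2_ge_0. assert (0 <= db^2) by apply pow2_ge_0.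
  nra.
Qed.

Ltac mn := first [ apply Rle_refl | eapply Rle_trans; [apply Rmin_l | mn] | eapply Rle_trans; [apply Rmin_r | mn] ].

Theorem mainTheorem7 (k1 k2 : R) (hk1 : 0 < k1) (hk2 : 0 < k2) :
  exists eps : R, 0 < eps /\
    forall (a1 b1 a2 b2 t : R),
      Rabs (a1 - hcdf k1 k2 (- k1)) < eps ->
      Rabs (b1 - (1 - hcdf k1 k2 k2)) < eps ->
      Rabs (a2 - hcdf k1 k2 (- k1)) < eps ->
      Rabs (b2 - (1 - hcdf k1 k2 k2)) < eps ->
      (a1, b1) <> (a2, b2) ->
      0 < t < 1 ->
      sigma2 k1 k2 (t * a1 + (1 - t) * a2) (t * b1 + (1 - t) * b2)
        < t * sigma2 k1 k2 a1 b1 + (1 - t) * sigma2 k1 k2 a2 b2.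
Proof.
  rewrite !hcdf_eq by auto. fold (astar k1 k2). fold (bstar k1 k2).
  set (a0 := astar k1 k2). set (b0 := bstar k1 k2).
  set (sx := Saa k1 k2 a0 b0). set (sy := Sbb k1 k2 a0 b0). set (sz := Sab k1 k2 a0 b0).
  destruct (star_PD k1 k2 hk1 hk2) as [Px [Py Pd]]. fold a0 b0 sx sy sz in Px, Py, Pd.
  set (mu := (sx * sy - sz^2) / (sx + sy)).
  assert (Hmu : 0 < mu) by (unfold mu; apply Rdiv_lt_0_compat; lra).
  set (eta := mu / 4). assert (Heta : 0 < eta) by (unfold eta; lra).
  destruct (cont2_eps _ _ _ (Saa_cont k1 k2 hk1 hk2) eta Heta) as [d1 [Hd1 C1]].
  destruct (cont2_eps _ _ _ (Sbb_cont k1 k2 hk1 hk2) eta Heta) as [d2 [Hd2 C2]].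
  destruct (cont2_eps _ _ _ (Sab_cont k1 k2 hk1 hk2) eta Heta) as [d3 [Hd3 C3]].
  simpl in C1, C2, C3. fold a0 b0 in C1, C2, C3. fold sx in C1. fold sy in C2. fold sz in C3.
  destruct (inR_open k1 k2 a0 (astar_inR k1 k2 hk1 hk2)) as [r1 [Hr1 R1]].
  destruct (inR_open k1 k2 (1 - b0) (bstar_inR k1 k2 hk1 hk2)) as [r2 [Hr2 R2]].
  assert (Ha0 : 0 < a0).
  { unfold a0, astar. rewrite Fc_m1 by auto. apply Rdiv_lt_0_compat. apply gs_pos.
    apply Rmult_lt_0_compat; auto. apply Zc_pos; auto. }
  assert (Hb0 : 0 < b0).
  { unfold b0, bstar. rewrite Fc_k2 by auto. apply Rdiv_lt_0_compat. apply gs_pos.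
    apply Rmult_lt_0_compat; auto. apply Zc_pos; auto. }
  assert (HD0 : 0 < 1 - a0 - b0) by (apply Dstar_pos; auto).
  set (eps := Rmin (Rmin (Rmin d1 d2) (Rmin d3 r1)) (Rmin r2 (Rmin (a0 / 2) (Rmin (b0 / 2) ((1 - a0 - b0) / 4))))).
  assert (Heps : 0 < eps).
  { unfold eps. repeat apply Rmin_glb_lt; lra. }
  assert (Box : forall a b, Rabs (a - a0) < eps -> Rabs (b - b0) < eps ->
     inR k1 k2 a /\ inR k1 k2 (1 - b) /\ 0 < a /\ 0 < b /\ a < 1 - b /\ 1 - a - b <> 0 /\
     Rabs (Saa k1 k2 a b - sx) < eta /\ Rabs (Sbb k1 k2 a b - sy) < eta /\ Rabs (Sab k1 k2 a b - sz) < eta).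
  { intros a b Ha Hb.
    assert (e1 : eps <= d1) by (unfold eps; mn). assert (e2 : eps <= d2) by (unfold eps; mn).
    assert (e3 : eps <= d3) by (unfold eps; mn). assert (e4 : eps <= r1) by (unfold eps; mn).
    assert (e5 : eps <= r2) by (unfold eps; mn). assert (e6 : eps <= a0 / 2) by (unfold eps; mn).
    assert (e7 : eps <= b0 / 2) by (unfold eps; mn). assert (e8 : eps <= (1 - a0 - b0) / 4) by (unfold eps; mn).
    assert (Ha' : a0 - eps < a < a0 + eps) by (unfold Rabs in Ha; destruct Rcase_abs in Ha; lra).
    assert (Hb' : b0 - eps < b < b0 + eps) by (unfold Rabs in Hb; destruct Rcase_abs in Hb; lra).
    split. apply R1; lra.
    split. apply R2. replace (1 - b - (1 - b0)) with (- (b - b0)) by ring. rewrite Rabs_Ropp. lra.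
    split. lra. split. lra. split. lra. split. lra.
    split. apply C1; lra. split. apply C2; lra. apply C3; lra. }
  exists eps. split; auto.
  intros a1 b1 a2 b2 t Ha1 Hb1 Ha2 Hb2 Hne Ht.
  set (da := a1 - a2). set (db := b1 - b2).
  assert (Hpos : 0 < da^2 + db^2).
  { destruct (Req_dec da 0) as [h1|h1]; destruct (Req_dec db 0) as [h2|h2].
    - exfalso. apply Hne. unfold da, db in *. f_equal; lra.
    - pose proof (pow2_ge_0 da). assert (0 < db^2) by (apply pow2_gt_0; auto). lra.
    - pose proof (pow2_ge_0 db). assert (0 < da^2) by (apply pow2_gt_0; auto). lra.
    - pose proof (pow2_ge_0 db). assert (0 < da^2) by (apply pow2_gt_0; auto). lra. }
  assert (BoxT : forall s, 0 <= s <= 1 ->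
     inR k1 k2 (a2 + s * da) /\ inR k1 k2 (1 - (b2 + s * db)) /\ 0 < a2 + s * da /\ 0 < b2 + s * db /\
     a2 + s * da < 1 - (b2 + s * db) /\ 1 - (a2 + s * da) - (b2 + s * db) <> 0 /\
     Rabs (Saa k1 k2 (a2 + s * da) (b2 + s * db) - sx) < eta /\
     Rabs (Sbb k1 k2 (a2 + s * da) (b2 + s * db) - sy) < eta /\
     Rabs (Sab k1 k2 (a2 + s * da) (b2 + s * db) - sz) < eta).
  { intros s Hs. apply Box; unfold da, db; apply seg_close; auto. }
  assert (Main : H0f k1 k2 a2 b2 da db t < t * H0f k1 k2 a2 b2 da db 1 + (1 - t) * H0f k1 k2 a2 b2 da db 0).
  { apply (conv1 (H0f k1 k2 a2 b2 da db) (H1f k1 k2 a2 b2 da db) (H2f k1 k2 a2 b2 da db)); auto. intros s Hs. destruct (BoxT s Hs) as [I1 [I2 [_ [_ [_ [HD [S1 [S2 S3]]]]]]]].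
    split. apply H0_deriv; auto. split. apply H1_deriv; auto.
    unfold H2f. pose proof (form_lb sx sy sz da db Px Py Pd) as F1. fold mu in F1.
    pose proof (pert _ _ _ sx sy sz eta da db S1 S2 S3) as F2.
    assert (0 < mu * (da^2 + db^2)) by (apply Rmult_lt_0_compat; auto).
    unfold eta in F2. lra. }
  assert (Sg : forall s, 0 <= s <= 1 -> sigma2 k1 k2 (a2 + s * da) (b2 + s * db) = H0f k1 k2 a2 b2 da db s).
  { intros s Hs. destruct (BoxT s Hs) as [I1 [I2 [P1 [P2 [P3 _]]]]].
    unfold H0f, Nq, Lq, Uq. apply sigma2_eq; auto. }
  replace (t * a1 + (1 - t) * a2) with (a2 + t * da) by (unfold da; ring).
  replace (t * b1 + (1 - t) * b2) with (b2 + t * db) by (unfold db; ring).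
  replace (sigma2 k1 k2 a1 b1) with (sigma2 k1 k2 (a2 + 1 * da) (b2 + 1 * db)) by (unfold da, db; f_equal; ring).
  replace (sigma2 k1 k2 a2 b2) with (sigma2 k1 k2 (a2 + 0 * da) (b2 + 0 * db)) by (f_equal; ring).
  rewrite !Sg by lra. exact Main.
Qed.
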